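(* Let $k\ge1$ and consider the following linear maps $\mathcal{D}^k_{0,1}(S^1)\to\mathcal{D}^k_{0,1}(S^1)$, written for $A=\sum_{i=0}^k a_i(x)\frac{d^i}{dx^i}$ in a local coordinate $x$ (with $d=\frac{d}{dx}\in\mathcal{D}^1_{0,1}(S^1)$ the de Rham differential and functions understood as zeroth order operators): $C(A)=\sum_{i=0}^k(-1)^i\big(\frac{d}{dx}\big)^i\circ a_i(x)$; $P_0(A)=a_0(x)$; $P_0^*(A)=\sum_{i=0}^k(-1)^i a_i^{(i)}(x)$; $P_1(A)=\big(\sum_{i=1}^k(-1)^{i-1}a_i^{(i-1)}(x)\big)\circ d$; $L(A)=\big(\int_{S^1}a_0(x)\,dx\big)\, d$. Then these maps belong to $\mathcal{I}^k_{0,1}(S^1)$ and satisfy the following relations (products are compositions): $P_0P_0=P_0$, $P_0C=P_0^*$, $P_0P_0^*=P_0^*$, $P_0P_1=0$, $P_0L=0$; $CP_0=P_0$, $C^2=\mathrm{Id}$, $CP_0^*=P_0^*$, $CP_1=P_0^*-P_1-P_0$, $CL=-L$; $P_0^*P_0=P_0$, $P_0^*C=P_0$, $P_0^*P_0^*=P_0^*$, $P_0^*P_1=P_0^*-P_0$, $P_0^*L=0$; $P_1P_0=0$, $P_1C=-P_1$, $P_1P_0^*=0$, $P_1P_1=P_1$, $P_1L=L$; $LP_0=L$, $LC=L$, $LP_0^*=L$, $LP_1=0$, $LL=0$.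
   Context: $\mathcal{F}_\lambda$ denotes the space of smooth $\lambda$-densities $\phi(x)(dx)^\lambda$ on $S^1$ with $\mathrm{Diff}(S^1)$-action $\rho^\lambda_{f^{-1}}:\phi(x)(dx)^\lambda\mapsto (f'(x))^\lambda\phi(f(x))(dx)^\lambda$; in particular $\mathcal{F}_0$ is functions and $\mathcal{F}_1$ is 1-forms. $\mathcal{D}^k_{0,1}(S^1)$ is the space of linear differential operators $A=\sum_{i=0}^k a_i(x)\frac{d^i}{dx^i}:\mathcal{F}_0\to\mathcal{F}_1$ of order $\le k$, with $\mathrm{Diff}(S^1)$-action $A\mapsto\rho^1_f\circ A\circ\rho^0_{f^{-1}}$. $\mathcal{I}^k_{0,1}(S^1)$ is the associative algebra of linear maps $\mathcal{D}^k_{0,1}(S^1)\to\mathcal{D}^k_{0,1}(S^1)$ commuting with this action. Note that $a_0(x)dx$ is a well-defined 1-form, so $\int_{S^1}a_0\,dx$ is well defined. *)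

(* Defs.v *)
From Stdlib Require Import Reals ClassicalEpsilon.
From Coquelicot Require Import Coquelicot.
Open Scope R_scope.

(* S^1 = R/Z: functions / densities on S^1 are 1-periodic functions on R,
   written in the global coordinate x. *)
Definition smooth (f : R -> R) : Prop :=
  forall (n : nat) (x : R), ex_derive (Derive_n f n) x.
Definition periodic (f : R -> R) : Prop := forall x, f (x + 1) = f x.
Definition sfun (f : R -> R) : Prop := smooth f /\ periodic f.

(* Orientation-preserving diffeomorphisms of S^1, via their lifts to R. *)
Definition diffS1 (f : R -> R) : Prop :=
  smooth f /\ (forall x, 0 < Derive f x) /\ (forall x, f (x + 1) = f x + 1).

(* A differential operator A = sum_{i=0}^k a_i(x) (d/dx)^i is represented by
   its coefficient sequence a : nat -> (R -> R), with a i = 0 for i > k. *)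
Definition Dk (k : nat) (a : nat -> R -> R) : Prop :=
  (forall i, sfun (a i)) /\ (forall i, (k < i)%nat -> a i = (fun _ => 0)).

Definition op (k : nat) (a : nat -> R -> R) (g : R -> R) : R -> R :=
  fun x => sum_n (fun i => a i x * Derive_n g i x) k.

(* b = f . a  for the action A |-> rho^1_f o A o rho^0_{f^{-1}}, where
   rho^lambda_{f^{-1}} phi = (f')^lambda (phi o f).  Equivalently
   rho^1_{f^{-1}} o (f.A) = A o rho^0_{f^{-1}}, i.e.
   f'(x) * (f.A)(phi)(f x) = A(phi o f)(x). *)
Definition act_rel (k : nat) (f : R -> R) (a b : nat -> R -> R) : Prop :=
  forall phi, sfun phi -> forall x,
    Derive f x * op k b phi (f x) = op k a (fun y => phi (f y)) x.

Definition Map := (nat -> R -> R) -> (nat -> R -> R).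

(* Membership in I^k_{0,1}(S^1): a linear self-map of D^k_{0,1} commuting
   with the Diff(S^1)-action. *)
Definition in_Ik (k : nat) (T : Map) : Prop :=
  (forall a, Dk k a -> Dk k (T a)) /\
  (forall a c, Dk k a -> Dk k c ->
     T (fun i x => a i x + c i x) = (fun i x => T a i x + T c i x)) /\
  (forall r a, Dk k a -> T (fun i x => r * a i x) = (fun i x => r * T a i x)) /\
  (forall f, diffS1 f -> forall a b, Dk k a -> Dk k b ->
     act_rel k f a b -> act_rel k f (T a) (T b)).

Definition eqmap (k : nat) (T S : Map) : Prop := forall a, Dk k a -> T a = S a.

Definition mcomp (T S : Map) : Map := fun a => T (S a).
Definition idmap : Map := fun a => a.
Definition zeromap : Map := fun _ _ _ => 0.
Definition addmap (T S : Map) : Map := fun a i x => T a i x + S a i x.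
Definition oppmap (T : Map) : Map := fun a i x => - T a i x.

Definition Cspec (k : nat) (a b : nat -> R -> R) : Prop :=
  Dk k b /\
  forall g, sfun g ->
    op k b g = (fun x => sum_n (fun i => (-1) ^ i * Derive_n (fun y => a i y * g y) i x) k).

Lemma inhabited_coeffs : inhabited (nat -> R -> R).
Proof. exact (inhabits (fun _ _ => 0)). Qed.

(* The coefficient sequence of C(A) (chosen; its correctness is part of the theorem). *)
Definition Cmap (k : nat) : Map :=
  fun a => epsilon inhabited_coeffs (Cspec k a).

Definition P0 (k : nat) : Map :=
  fun a i => match i with O => a O | _ => fun _ => 0 end.

Definition P0s (k : nat) : Map :=
  fun a i => match i with
             | O => fun x => sum_n (fun j => (-1) ^ j * Derive_n (a j) j x) k
             | _ => fun _ => 0 end.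

Definition P1 (k : nat) : Map :=
  fun a i => match i with
             | 1%nat => fun x => sum_n (fun j => (-1) ^ j * Derive_n (a (S j)) j x) (k - 1)
             | _ => fun _ => 0 end.

Definition Lmap (k : nat) : Map :=
  fun a i => match i with
             | 1%nat => fun _ => RInt (a O) 0 1
             | _ => fun _ => 0 end.

(* Main.v *)
Require Import Defs.
From Stdlib Require Import Reals Lra Lia ZArith ClassicalEpsilon FunctionalExtensionality.
From Coquelicot Require Import Coquelicot.
Open Scope R_scope.

Lemma smooth_exd (f : R -> R) : smooth f -> forall x, ex_derive f x.
Proof. intros H x. exact (H 0%nat x). Qed.

Lemma smooth_exdn (f : R -> R) : smooth f -> forall n y, ex_derive_n f n y.
Proof. intros H [|n] y; simpl; auto. Qed.

Lemma smooth_loc (f : R -> R) x n : smooth f ->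
  locally x (fun y => forall k, (k <= n)%nat -> ex_derive_n f k y).
Proof. intros H. apply filter_forall. intros y k _. now apply smooth_exdn. Qed.

Lemma smooth_ext (f g : R -> R) : (forall x, f x = g x) -> smooth f -> smooth g.
Proof.
  intros E H n x. apply ex_derive_ext with (Derive_n f n).
  intros t. now apply Derive_n_ext. apply H.
Qed.

Lemma Derive_n_S' (f : R -> R) n x : Derive_n f (S n) x = Derive_n (Derive f) n x.
Proof. replace (S n) with (n+1)%nat by lia. rewrite <- (Derive_n_comp f n 1). reflexivity. Qed.

Lemma smooth_Derive (f : R -> R) : smooth f -> smooth (Derive f).
Proof.
  intros H n x. apply ex_derive_ext with (Derive_n f (S n)).
  intros t. apply Derive_n_S'. apply H.
Qed.

Lemma smooth_Derive_n (f : R -> R) m : smooth f -> smooth (Derive_n f m).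
Proof. induction m; intros H; simpl. exact H. apply smooth_Derive. now apply IHm. Qed.

Inductive Alg (G : (R -> R) -> Prop) : (R -> R) -> Prop :=
 | Ag : forall h, G h -> Alg G h
 | Ac : forall c, Alg G (fun _ => c)
 | Ap : forall u v, Alg G u -> Alg G v -> Alg G (fun x => u x + v x)
 | Am : forall u v, Alg G u -> Alg G v -> Alg G (fun x => u x * v x)
 | Ae : forall u v, Alg G u -> (forall x, u x = v x) -> Alg G v.

Lemma closure_smooth (S : (R -> R) -> Prop) :
  (forall u, S u -> (forall x, ex_derive u x) /\ S (Derive u)) ->
  forall u, S u -> smooth u.
Proof.
  intros H u Su.
  assert (K : forall n, S (Derive_n u n)).
  { induction n. exact Su. simpl. apply H. exact IHn. }
  intros n x. apply (H _ (K n)).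
Qed.

Lemma Alg_deriv (G : (R -> R) -> Prop) :
  (forall h, G h -> (forall x, ex_derive h x) /\ Alg G (Derive h)) ->
  forall u, Alg G u -> (forall x, ex_derive u x) /\ Alg G (Derive u).
Proof.
  intros HG u Hu. induction Hu as [h Gh|c|u v Hu [IHu1 IHu2] Hv [IHv1 IHv2]
     |u v Hu [IHu1 IHu2] Hv [IHv1 IHv2]|u v Hu [IHu1 IHu2] E].
  - now apply HG.
  - split. intros; apply ex_derive_const.
    apply Ae with (fun _ => 0). apply Ac. intros; now rewrite Derive_const.
  - split. intros; apply (ex_derive_plus u v); auto.
    apply Ae with (fun x => Derive u x + Derive v x). now apply Ap.
    intros x. now rewrite Derive_plus.
  - split. intros; apply ex_derive_mult; auto.
    apply Ae with (fun x => Derive u x * v x + u x * Derive v x).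
    apply Ap; apply Am; auto.
    intros x. now rewrite Derive_mult.
  - split. intros x; apply ex_derive_ext with u; auto.
    apply Ae with (Derive u). auto. intros x; now apply Derive_ext.
Qed.

Lemma Alg_smooth (G : (R -> R) -> Prop) :
  (forall h, G h -> (forall x, ex_derive h x) /\ Alg G (Derive h)) ->
  forall u, Alg G u -> smooth u.
Proof. intros HG. apply closure_smooth. now apply Alg_deriv. Qed.

Lemma smooth_gen : forall h, smooth h -> (forall x, ex_derive h x) /\ Alg smooth (Derive h).
Proof. intros h H. split. now apply smooth_exd. apply Ag. now apply smooth_Derive. Qed.

Lemma smooth_plus f g : smooth f -> smooth g -> smooth (fun x => f x + g x).
Proof. intros. apply (Alg_smooth smooth smooth_gen). apply Ap; now apply Ag. Qed.
Lemma smooth_mult f g : smooth f -> smooth g -> smooth (fun x => f x * g x).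
Proof. intros. apply (Alg_smooth smooth smooth_gen). apply Am; now apply Ag. Qed.
Lemma smooth_const c : smooth (fun _ => c).
Proof. apply (Alg_smooth smooth smooth_gen). apply Ac. Qed.
Lemma smooth_scal c f : smooth f -> smooth (fun x => c * f x).
Proof. intros. apply smooth_mult; auto using smooth_const. Qed.
Lemma smooth_opp f : smooth f -> smooth (fun x => - f x).
Proof. intros. apply smooth_ext with (fun x => -1 * f x). intros; ring. now apply smooth_scal. Qed.
Lemma smooth_id : smooth (fun x => x).
Proof.
  apply (closure_smooth (fun u => u = (fun x => x) \/ exists c, u = fun _ => c)).
  - intros u [->|[c ->]]; split.
    + intros; apply ex_derive_id.
    + right. exists 1. apply functional_extensionality; intros. apply Derive_id.
    + intros; apply ex_derive_const.
    + right. exists 0. apply functional_extensionality; intros. apply Derive_const.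
  - now left.
Qed.

Lemma smooth_comp (k f : R -> R) : smooth k -> smooth f -> smooth (fun x => k (f x)).
Proof.
  intros Hk Hf.
  apply (Alg_smooth (fun h => smooth h \/ exists k', smooth k' /\ h = fun x => k' (f x))).
  2: { apply Ag. right. eauto. }
  intros h [H|[k' [Hk' ->]]].
  - split. now apply smooth_exd. apply Ag. left. now apply smooth_Derive.
  - split. intros x. apply ex_derive_comp; now apply smooth_exd.
    apply Ae with (fun x => Derive f x * Derive k' (f x)).
    apply Am; apply Ag. left; now apply smooth_Derive.
    right. exists (Derive k'). split; auto. now apply smooth_Derive.
    intros x. symmetry; apply Derive_comp; now apply smooth_exd.
Qed.

Lemma smooth_inv (f : R -> R) : smooth f -> (forall x, f x <> 0) -> smooth (fun x => / f x).
Proof.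
  intros Hf Hn.
  apply (Alg_smooth (fun h => smooth h \/ h = fun x => / f x)).
  2: { apply Ag. now right. }
  intros h [H| ->].
  - split. now apply smooth_exd. apply Ag. left. now apply smooth_Derive.
  - split. intros x. apply ex_derive_inv; auto; now apply smooth_exd.
    apply Ae with (fun x => (-1 * Derive f x) * ((/ f x) * (/ f x))).
    apply Am. apply Am. apply Ac. apply Ag; left; now apply smooth_Derive.
    apply Am; apply Ag; now right.
    intros x. rewrite (Derive_inv f); auto. 2: now apply smooth_exd.
    specialize (Hn x). field. auto.
Qed.

Lemma smooth_trig (a b : R) : smooth (fun x => sin (a * x + b)) /\ smooth (fun x => cos (a * x + b)).
Proof.
  set (G := fun h => h = (fun x => sin (a * x + b)) \/ h = (fun x => cos (a * x + b))).
  assert (HG : forall h, G h -> (forall x, ex_derive h x) /\ Alg G (Derive h)).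
  { intros h [->| ->].
    - split. intros x. auto_derive. auto.
      apply Ae with (fun x => a * cos (a * x + b)). apply Am. apply Ac. apply Ag. now right.
      intros x. symmetry. apply is_derive_unique. auto_derive. auto. ring.
    - split. intros x. auto_derive. auto.
      apply Ae with (fun x => (- a) * sin (a * x + b)). apply Am. apply Ac. apply Ag. now left.
      intros x. symmetry. apply is_derive_unique. auto_derive. auto. ring. }
  split; apply (Alg_smooth G HG); apply Ag; [left|right]; auto.
Qed.

Lemma smooth_pow f n : smooth f -> smooth (fun x => f x ^ n).
Proof.
  intros H. induction n. simpl. apply smooth_const.
  simpl. now apply smooth_mult.
Qed.

Lemma periodic_Derive (h : R -> R) : (forall x, ex_derive h x) -> periodic h -> periodic (Derive h).
Proof.
  intros Hd Hp x.
  transitivity (Derive (fun y => h (y + 1)) x).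
  - rewrite (Derive_comp h (fun y => y + 1) x).
    replace (Derive (fun y => y + 1) x) with 1. ring.
    symmetry; apply is_derive_unique. auto_derive; auto.
    apply Hd. auto_derive; auto.
  - apply Derive_ext. intros; apply Hp.
Qed.

Lemma periodic_Derive_n (h : R -> R) n : smooth h -> periodic h -> periodic (Derive_n h n).
Proof.
  intros Hs Hp. induction n. exact Hp. simpl. apply periodic_Derive; [apply (smooth_exd _ (smooth_Derive_n h n Hs))|auto].
Qed.

Lemma sfun_Derive_n h n : sfun h -> sfun (Derive_n h n).
Proof. intros [Hs Hp]. split. now apply smooth_Derive_n. now apply periodic_Derive_n. Qed.

Lemma sfun_Derive h : sfun h -> sfun (Derive h).
Proof. intros H. apply (sfun_Derive_n h 1 H). Qed.

Lemma sfun_plus f g : sfun f -> sfun g -> sfun (fun x => f x + g x).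
Proof. intros [] []. split. now apply smooth_plus. intros x. unfold periodic in *. congruence. Qed.
Lemma sfun_mult f g : sfun f -> sfun g -> sfun (fun x => f x * g x).
Proof. intros [] []. split. now apply smooth_mult. intros x. unfold periodic in *. congruence. Qed.
Lemma sfun_const c : sfun (fun _ => c).
Proof. split. apply smooth_const. intros x; auto. Qed.
Lemma sfun_scal c f : sfun f -> sfun (fun x => c * f x).
Proof. intros. apply sfun_mult; auto using sfun_const. Qed.
Lemma sfun_opp f : sfun f -> sfun (fun x => - f x).
Proof. intros [] . split. now apply smooth_opp. intros x. unfold periodic in *. congruence. Qed.
Lemma sfun_ext f g : (forall x, f x = g x) -> sfun f -> sfun g.
Proof. intros E [H1 H2]. split. now apply smooth_ext with f. intros x. rewrite <- !E. apply H2. Qed.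
Lemma sfun_pow f n : sfun f -> sfun (fun x => f x ^ n).
Proof. intros [] . split. now apply smooth_pow. intros x. unfold periodic in *. congruence. Qed.

Ltac Req := match goal with |- @eq _ ?x ?y => change (@eq R x y) end;
  repeat match goal with |- context [sum_n ?f ?n] =>
    let s := fresh "s" in pose (s := (sum_n f n : R)); change (sum_n f n) with s; clearbody s end.
Lemma sumS (a : nat -> R) n : sum_n a (S n) = sum_n a n + a (S n).
Proof. rewrite sum_Sn. reflexivity. Qed.
Lemma sum0 (a : nat -> R) : sum_n a 0 = a 0%nat.
Proof. apply sum_O. Qed.
Lemma sum_ext_le (a b : nat -> R) n : (forall i, (i <= n)%nat -> a i = b i) -> sum_n a n = sum_n b n.
Proof.
  induction n; intros H. rewrite !sum0. apply H; lia.
  rewrite !sumS. rewrite IHn. rewrite H; auto. intros; apply H; lia.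
Qed.
Lemma sum_ext' (a b : nat -> R) n : (forall i, a i = b i) -> sum_n a n = sum_n b n.
Proof. intros; apply sum_ext_le; auto. Qed.
Lemma sum_plus' (a b : nat -> R) n : sum_n (fun i => a i + b i) n = sum_n a n + sum_n b n.
Proof. induction n. rewrite !sum0; auto. rewrite !sumS, IHn. (Req; ring). Qed.
Lemma sum_scal' (c : R) (a : nat -> R) n : sum_n (fun i => c * a i) n = c * sum_n a n.
Proof. induction n. rewrite !sum0; auto. rewrite !sumS, IHn. (Req; ring). Qed.
Lemma sum_zero' (a : nat -> R) n : (forall i, (i <= n)%nat -> a i = 0) -> sum_n a n = 0.
Proof. induction n; intros H. rewrite sum0; apply H; lia.
  rewrite sumS. rewrite IHn. rewrite (H (S n)) by lia. Req; ring. intros; apply H; lia. Qed.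
Lemma sum_switch' (u : nat -> nat -> R) m n :
  sum_n (fun i => sum_n (u i) n) m = sum_n (fun j => sum_n (fun i => u i j) m) n.
Proof. apply sum_n_switch. Qed.
Lemma sum_extend (a : nat -> R) m n : (m <= n)%nat -> (forall i, (m < i)%nat -> a i = 0) ->
  sum_n a n = sum_n a m.
Proof.
  intros Hmn H. induction Hmn. reflexivity. rewrite sumS, IHHmn, H; [Req; ring|lia].
Qed.
Lemma sum_shift (a : nat -> R) n :
  sum_n (fun i => match i with 0%nat => 0 | S i' => a i' end) (S n) = sum_n a n.
Proof.
  induction n. rewrite sumS, !sum0. (Req; ring). rewrite sumS, IHn, sumS. reflexivity.
Qed.
Lemma sum_first (a : nat -> R) n : sum_n a (S n) = a 0%nat + sum_n (fun i => a (S i)) n.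
Proof. induction n. rewrite sumS, !sum0. (Req; ring). rewrite sumS, IHn, sumS. (Req; ring). Qed.

Lemma smooth_sum (F : nat -> R -> R) n : (forall i, smooth (F i)) -> smooth (fun y => sum_n (fun i => F i y) n).
Proof.
  intros H. induction n. apply smooth_ext with (F 0%nat). intros; now rewrite sum0. apply H.
  apply smooth_ext with (fun y => sum_n (fun i => F i y) n + F (S n) y). intros; now rewrite sumS.
  now apply smooth_plus.
Qed.
Lemma sfun_sum (F : nat -> R -> R) n : (forall i, sfun (F i)) -> sfun (fun y => sum_n (fun i => F i y) n).
Proof.
  intros H. induction n. apply sfun_ext with (F 0%nat). intros; now rewrite sum0. apply H.
  apply sfun_ext with (fun y => sum_n (fun i => F i y) n + F (S n) y). intros; now rewrite sumS.
  now apply sfun_plus.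
Qed.

Lemma Dn_plus f g n x : smooth f -> smooth g ->
  Derive_n (fun y => f y + g y) n x = Derive_n f n x + Derive_n g n x.
Proof. intros. apply Derive_n_plus; now apply smooth_loc. Qed.
Lemma Dn_scal f c n x : Derive_n (fun y => c * f y) n x = c * Derive_n f n x.
Proof. apply Derive_n_scal_l. Qed.
Lemma Dn_sum (F : nat -> R -> R) m n x : (forall i, smooth (F i)) ->
  Derive_n (fun y => sum_n (fun i => F i y) m) n x = sum_n (fun i => Derive_n (F i) n x) m.
Proof.
  intros H. apply Derive_n_sum_n. apply filter_forall. intros y l j _ _. now apply smooth_exdn.
Qed.
Lemma Dn_zero n x : Derive_n (fun _ => 0) n x = 0.
Proof. destruct n. reflexivity. apply Derive_n_const. Qed.
Lemma Dn_const c n x : (0 < n)%nat -> Derive_n (fun _ => c) n x = 0.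
Proof. intros. destruct n. lia. apply Derive_n_const. Qed.

Definition Co := nat -> R -> R.
Definition smc (c : Co) := forall j, smooth (c j).
Definition sfc (c : Co) := forall j, sfun (c j).
Definition ord (N : nat) (c : Co) := forall j x, (N < j)%nat -> c j x = 0.

Definition Dop (c : Co) : Co :=
  fun j x => Derive (c j) x + match j with 0%nat => 0 | S j' => c j' x end.
Definition e0 (a : R -> R) : Co := fun j => match j with 0%nat => a | _ => fun _ => 0 end.

Lemma smc_Dop c : smc c -> smc (Dop c).
Proof.
  intros H j. unfold Dop. apply smooth_plus. now apply smooth_Derive.
  destruct j. apply smooth_const. apply H.
Qed.
Lemma sfc_Dop c : sfc c -> sfc (Dop c).
Proof.
  intros H j. unfold Dop. apply sfun_plus. now apply sfun_Derive.
  destruct j. apply sfun_const. apply H.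
Qed.
Lemma ord_Dop N c : ord N c -> ord (S N) (Dop c).
Proof.
  intros H j x Hj. unfold Dop. destruct j. lia.
  rewrite (H j x) by lia.
  rewrite (Derive_ext _ (fun _ => 0)). rewrite Derive_const. (Req; ring).
  intros; apply H; lia.
Qed.

Lemma op_Derive N c g x : smc c -> smooth g -> ord N c ->
  Derive (op N c g) x = op (S N) (Dop c) g x.
Proof.
  intros Hc Hg Ho. unfold op.
  assert (E1 : Derive (fun y => sum_n (fun i => c i y * Derive_n g i y) N) x =
    sum_n (fun i => Derive_n (fun y => c i y * Derive_n g i y) 1 x) N).
  { rewrite <- Dn_sum. reflexivity. intros i. apply smooth_mult; auto. now apply smooth_Derive_n. }
  rewrite E1. clear E1.
  simpl Derive_n.
  rewrite (sum_ext' _ (fun i => Derive (c i) x * Derive_n g i x + c i x * Derive_n g (S i) x)).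
  2:{ intros i. rewrite Derive_mult. reflexivity. now apply smooth_exd. apply (smooth_exd _ (smooth_Derive_n g i Hg)). }
  rewrite sum_plus'. unfold Dop.
  rewrite (sum_ext' (fun i => (Derive (c i) x + match i with 0%nat => 0 | S j' => c j' x end) * Derive_n g i x) (fun i => Derive (c i) x * Derive_n g i x +
     (match i with 0%nat => 0 | S j' => c j' x * Derive_n g (S j') x end))).
  2:{ intros [|i]; (Req; ring). }
  rewrite sum_plus'. f_equal.
  - rewrite sumS. rewrite (Derive_ext _ (fun _ => 0)). rewrite Derive_const. (Req; ring).
    intros; apply Ho; lia.
  - rewrite <- (sum_shift (fun i => c i x * Derive_n g (S i) x)). apply sum_ext'. intros [|i]; reflexivity.
Qed.

Definition Diter (i : nat) (a : R -> R) : Co := Nat.iter i Dop (e0 a).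

Lemma smc_e0 a : smooth a -> smc (e0 a).
Proof. intros H [|j]; simpl; auto. apply smooth_const. Qed.
Lemma sfc_e0 a : sfun a -> sfc (e0 a).
Proof. intros H [|j]; simpl; auto. apply sfun_const. Qed.
Lemma ord_e0 a : ord 0 (e0 a).
Proof. intros [|j] x H. lia. reflexivity. Qed.
Lemma smc_Diter i a : smooth a -> smc (Diter i a).
Proof. intros H. induction i. now apply smc_e0. simpl. now apply smc_Dop. Qed.
Lemma sfc_Diter i a : sfun a -> sfc (Diter i a).
Proof. intros H. induction i. now apply sfc_e0. simpl. now apply sfc_Dop. Qed.
Lemma ord_Diter i a : ord i (Diter i a).
Proof. induction i. apply ord_e0. simpl. now apply ord_Dop. Qed.

Lemma op_ext N c d g x : (forall j, (j <= N)%nat -> c j x = d j x) -> op N c g x = op N d g x.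
Proof. intros H. unfold op. apply sum_ext_le. intros i Hi. now rewrite H. Qed.

Lemma op_extend m N c g x : ord m c -> (m <= N)%nat -> op N c g x = op m c g x.
Proof. intros Ho H. unfold op. apply sum_extend; auto. intros i Hi. rewrite Ho; auto. (Req; ring). Qed.

Lemma Dn_prod_op a g i x : smooth a -> smooth g ->
  Derive_n (fun y => a y * g y) i x = op i (Diter i a) g x.
Proof.
  intros Ha Hg. revert x. induction i; intros x.
  - unfold op. rewrite sum0. reflexivity.
  - simpl Derive_n. rewrite (Derive_ext _ (op i (Diter i a) g)) by auto.
    rewrite op_Derive; auto. now apply smc_Diter. apply ord_Diter.
Qed.

Definition Cexp (k : nat) (a : Co) : Co :=
  fun j x => sum_n (fun i => (-1) ^ i * Diter i (a i) j x) k.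

Lemma op_Cexp k a g x : smc a -> smooth g ->
  op k (Cexp k a) g x = sum_n (fun i => (-1) ^ i * Derive_n (fun y => a i y * g y) i x) k.
Proof.
  intros Ha Hg. unfold op, Cexp.
  rewrite (sum_ext' _ (fun j => sum_n (fun i => (-1) ^ i * Diter i (a i) j x * Derive_n g j x) k)).
  2:{ intros j. rewrite Rmult_comm, <- sum_scal'. apply sum_ext'. intros; (Req; ring). }
  rewrite sum_switch'. apply sum_ext_le. intros i Hi.
  rewrite Dn_prod_op; auto.
  rewrite <- (op_extend i k); auto. 2: apply ord_Diter.
  unfold op. rewrite <- sum_scal'. apply sum_ext'. intros; (Req; ring).
Qed.

Lemma Cexp_sfc k a : sfc a -> sfc (Cexp k a).
Proof.
  intros H j. unfold Cexp. apply sfun_sum. intros i. apply sfun_scal. now apply sfc_Diter.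
Qed.
Lemma Cexp_ord k a : ord k (Cexp k a).
Proof.
  intros j x Hj. unfold Cexp. apply sum_zero'. intros i Hi. rewrite ord_Diter. (Req; ring). lia.
Qed.

Lemma Dk_of k b : sfc b -> ord k b -> Dk k b.
Proof.
  intros H1 H2. split; auto. intros i Hi. apply functional_extensionality. intros x. now apply H2.
Qed.
Lemma Dk_sfc k a : Dk k a -> sfc a.
Proof. intros [H _]. exact H. Qed.
Lemma Dk_smc k a : Dk k a -> smc a.
Proof. intros [H _] j. apply H. Qed.
Lemma Dk_ord k a : Dk k a -> ord k a.
Proof. intros [_ H] j x Hj. now rewrite H. Qed.

Lemma Cspec_Cexp k a : Dk k a -> Cspec k a (Cexp k a).
Proof.
  intros Ha. split. apply Dk_of. apply Cexp_sfc. now apply (Dk_sfc k). apply Cexp_ord.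
  intros g Hg. apply functional_extensionality. intros x. apply op_Cexp.
  now apply (Dk_smc k). apply Hg.
Qed.

Definition flat (u : R -> R) (p : nat) (x0 : R) := forall j, (j < p)%nat -> Derive_n u j x0 = 0.

Lemma flat_S u p x0 : flat u (S p) x0 <-> u x0 = 0 /\ flat (Derive u) p x0.
Proof.
  split.
  - intros H. split. apply (H 0%nat); lia. intros j Hj. rewrite <- Derive_n_S'. apply H; lia.
  - intros [H1 H2] [|j] Hj. exact H1. rewrite Derive_n_S'. apply H2; lia.
Qed.
Lemma flat_mono u p q x0 : flat u p x0 -> (q <= p)%nat -> flat u q x0.
Proof. intros H Hq j Hj. apply H; lia. Qed.
Lemma flat_ext u v p x0 : (forall x, u x = v x) -> flat u p x0 -> flat v p x0.
Proof. intros E H j Hj. rewrite <- (Derive_n_ext u v); auto. Qed.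
Lemma flat_plus u v p x0 : smooth u -> smooth v -> flat u p x0 -> flat v p x0 -> flat (fun x => u x + v x) p x0.
Proof. intros Hu Hv H1 H2 j Hj. rewrite Dn_plus; auto. rewrite H1, H2; auto. ring. Qed.
Lemma flat_scal u c p x0 : flat u p x0 -> flat (fun x => c * u x) p x0.
Proof. intros H j Hj. rewrite Dn_scal, H; auto. ring. Qed.
Lemma flat_zero p x0 : flat (fun _ => 0) p x0.
Proof. intros j _. apply Dn_zero. Qed.
Lemma flat_0 u x0 : flat u 0 x0.
Proof. intros j H. lia. Qed.
Lemma flat_sum (F : nat -> R -> R) n p x0 : (forall i, smooth (F i)) -> (forall i, (i <= n)%nat -> flat (F i) p x0) ->
  flat (fun y => sum_n (fun i => F i y) n) p x0.
Proof.
  intros Hs H j Hj. rewrite Dn_sum; auto. apply sum_zero'. intros i Hi. apply H; auto.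
Qed.

Lemma flat_mult_r p : forall u v x0, smooth u -> smooth v -> flat u p x0 -> flat (fun x => u x * v x) p x0.
Proof.
  induction p; intros u v x0 Hu Hv H. apply flat_0.
  apply flat_S in H as [H1 H2]. apply flat_S. split. rewrite H1; ring.
  apply flat_ext with (fun x => Derive u x * v x + u x * Derive v x).
  intros x. rewrite Derive_mult; auto; now apply smooth_exd.
  apply flat_plus. apply smooth_mult; auto. now apply smooth_Derive.
  apply smooth_mult; auto. now apply smooth_Derive.
  apply IHp; auto. now apply smooth_Derive.
  apply IHp; auto. now apply smooth_Derive.
  apply flat_mono with (S p). apply flat_S; auto. lia.
Qed.
Lemma flat_mult_l p u v x0 : smooth u -> smooth v -> flat v p x0 -> flat (fun x => u x * v x) p x0.
Proof. intros. apply flat_ext with (fun x => v x * u x). intros; ring. now apply flat_mult_r. Qed.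

Lemma flat_mult n : forall p q u v x0, (p + q)%nat = n -> smooth u -> smooth v ->
  flat u p x0 -> flat v q x0 -> flat (fun x => u x * v x) n x0.
Proof.
  induction n; intros p q u v x0 Hn Hu Hv H1 H2. apply flat_0.
  destruct p as [|p].
  { assert (q = S n) by lia. subst q. apply flat_mult_l; auto. }
  destruct q as [|q].
  { assert (p = n) by lia. subst p. apply flat_mult_r; auto. }
  apply flat_S in H1 as [H1a H1b]. apply flat_S in H2 as [H2a H2b].
  apply flat_S. split. rewrite H1a; ring.
  apply flat_ext with (fun x => Derive u x * v x + u x * Derive v x).
  intros x. rewrite Derive_mult; auto; now apply smooth_exd.
  apply flat_plus. apply smooth_mult; auto. now apply smooth_Derive.
  apply smooth_mult; auto. now apply smooth_Derive.
  apply (IHn p (S q)). lia. now apply smooth_Derive. auto. auto. apply flat_S; auto.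
  apply (IHn (S p) q). lia. auto. now apply smooth_Derive. apply flat_S; auto. auto.
Qed.

Lemma flat_comp p : forall w f x0, smooth w -> smooth f -> flat w p (f x0) -> flat (fun x => w (f x)) p x0.
Proof.
  induction p; intros w f x0 Hw Hf H. apply flat_0.
  apply flat_S in H as [H1 H2]. apply flat_S. split. exact H1.
  apply flat_ext with (fun x => Derive w (f x) * Derive f x).
  intros x. rewrite (Derive_comp w f x). ring. now apply smooth_exd. now apply smooth_exd.
  apply flat_mult_r. apply smooth_comp; auto. now apply smooth_Derive.
  now apply smooth_Derive. apply IHp; auto. now apply smooth_Derive.
Qed.

Lemma Dn_flat_mult p : forall u v x0, smooth u -> smooth v -> flat u p x0 ->
  Derive_n (fun x => u x * v x) p x0 = Derive_n u p x0 * v x0.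
Proof.
  induction p; intros u v x0 Hu Hv H. reflexivity.
  rewrite Derive_n_S'.
  rewrite (Derive_n_ext _ (fun x => Derive u x * v x + u x * Derive v x)).
  2:{ intros x. rewrite Derive_mult; auto; now apply smooth_exd. }
  rewrite Dn_plus. 2,3: apply smooth_mult; auto; now apply smooth_Derive.
  rewrite IHp; auto. 2: now apply smooth_Derive. 2: now apply flat_S in H.
  rewrite (flat_mult_r (S p) u (Derive v) x0); auto. 2: now apply smooth_Derive.
  rewrite Derive_n_S'. ring.
Qed.

Lemma Dn_flat_s (s : R -> R) x0 : smooth s -> s x0 = 0 -> forall p u, smooth u -> flat u p x0 ->
  Derive_n (fun x => u x * s x) (S p) x0 = INR (S p) * Derive_n u p x0 * Derive s x0.
Proof.
  intros Hs Hs0. induction p; intros u Hu H.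
  - simpl. rewrite Derive_mult; try now apply smooth_exd. rewrite Hs0. ring.
  - rewrite Derive_n_S'.
    rewrite (Derive_n_ext _ (fun x => Derive u x * s x + u x * Derive s x)).
    2:{ intros x. rewrite Derive_mult; auto; now apply smooth_exd. }
    rewrite Dn_plus. 2,3: apply smooth_mult; auto; now apply smooth_Derive.
    rewrite IHp. 2: now apply smooth_Derive. 2: now apply flat_S in H.
    rewrite Dn_flat_mult; auto. 2: now apply smooth_Derive.
    rewrite <- Derive_n_S'. rewrite !S_INR. ring.
Qed.

Lemma Dn_pow (s : R -> R) x0 : smooth s -> s x0 = 0 -> forall j,
  flat (fun x => s x ^ j) j x0 /\
  Derive_n (fun x => s x ^ j) j x0 = INR (Factorial.fact j) * (Derive s x0) ^ j.
Proof.
  intros Hs Hs0 j. induction j.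
  - split. apply flat_0. simpl. ring.
  - destruct IHj as [F D]. split.
    + apply flat_ext with (fun x => s x ^ j * s x). intros; simpl; ring.
      apply (flat_mult (S j) j 1); auto. lia. now apply smooth_pow.
      intros [|i] Hi. exact Hs0. lia.
    + rewrite (Derive_n_ext _ (fun x => s x ^ j * s x)) by (intros; simpl; ring).
      rewrite Dn_flat_s; auto. 2: now apply smooth_pow. rewrite D.
      rewrite fact_simpl, mult_INR. simpl. ring.
Qed.

Definition sn0 (x0 : R) := fun y => sin (2 * PI * y + (- (2 * PI * x0))).

Lemma sn0_sfun x0 : sfun (sn0 x0).
Proof.
  split. exact (proj1 (smooth_trig (2*PI) (-(2*PI*x0)))). intros x. unfold sn0.
  replace (2 * PI * (x + 1) + - (2 * PI * x0)) with ((2 * PI * x + - (2 * PI * x0)) + 2 * INR 1 * PI).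
  apply sin_period. rewrite INR_1; ring.
Qed.
Lemma sn0_0 x0 : sn0 x0 x0 = 0.
Proof. unfold sn0. replace (2 * PI * x0 + - (2 * PI * x0)) with 0 by ring. apply sin_0. Qed.
Lemma sn0_D x0 : Derive (sn0 x0) x0 = 2 * PI.
Proof.
  apply is_derive_unique. unfold sn0. auto_derive. auto.
  replace (2 * PI * x0 + - (2 * PI * x0)) with 0 by ring. rewrite cos_0. ring.
Qed.

Lemma op_minus N b c g x : op N (fun j y => b j y - c j y) g x = op N b g x - op N c g x.
Proof.
  unfold op. rewrite (sum_ext' _ (fun i => b i x * Derive_n g i x + (-1) * (c i x * Derive_n g i x))).
  rewrite sum_plus', sum_scal'. Req; ring. intros; Req; ring.
Qed.

Lemma top_zero n b : smc b -> ord n b -> (forall g, sfun g -> forall x, op n b g x = 0) ->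
  forall x, b n x = 0.
Proof.
  intros Hb Ho H x0.
  destruct (Dn_pow (sn0 x0) x0 (proj1 (sn0_sfun x0)) (sn0_0 x0) n) as [F D].
  specialize (H (fun x => sn0 x0 x ^ n) (sfun_pow _ n (sn0_sfun x0)) x0).
  unfold op in H. destruct n.
  - rewrite sum0 in H. simpl in H. rewrite Rmult_1_r in H. exact H.
  - rewrite sumS in H. rewrite sum_zero' in H. 2:{ intros i Hi. rewrite F. ring. lia. }
    rewrite D, sn0_D in H.
    assert (INR (Factorial.fact (S n)) * (2 * PI) ^ S n <> 0).
    { apply Rmult_integral_contrapositive. split. apply not_0_INR, Factorial.fact_neq_0.
      apply pow_nonzero. pose proof PI_RGT_0. lra. }
    rewrite Rplus_0_l in H. apply Rmult_integral in H as [H|H]. exact H. contradiction.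
Qed.

Lemma op_unique n : forall b, smc b -> ord n b -> (forall g, sfun g -> forall x, op n b g x = 0) ->
  forall j x, b j x = 0.
Proof.
  induction n; intros b Hb Ho H j x.
  - destruct j. now apply (top_zero 0). apply Ho; lia.
  - pose proof (top_zero _ b Hb Ho H) as T.
    apply IHn; auto.
    + intros i y Hi. destruct (Nat.eq_dec i (S n)). subst. apply T. apply Ho; lia.
    + intros g Hg y. rewrite <- (H g Hg y). unfold op. rewrite sumS, T. Req; ring.
Qed.

Lemma Cspec_unique k a b c : Cspec k a b -> Cspec k a c -> b = c.
Proof.
  intros [Hb Eb] [Hc Ec].
  assert (Z : forall j x, b j x - c j x = 0).
  { apply (op_unique k (fun j x => b j x - c j x)).
    - intros j. apply smooth_plus. now apply (Dk_smc k). apply smooth_opp. now apply (Dk_smc k).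
    - intros j x Hj. rewrite (Dk_ord k b), (Dk_ord k c); auto. ring.
    - intros g Hg x. rewrite op_minus. rewrite Eb, Ec; auto. ring. }
  apply functional_extensionality; intros j. apply functional_extensionality; intros x.
  specialize (Z j x). lra.
Qed.

Lemma Cmap_spec k a : Dk k a -> Cspec k a (Cmap k a).
Proof.
  intros Ha. unfold Cmap. apply epsilon_spec. exists (Cexp k a). now apply Cspec_Cexp.
Qed.

Lemma Cmap_char k a b : Dk k a -> Cspec k a b -> Cmap k a = b.
Proof. intros Ha Hb. apply (Cspec_unique k a). now apply Cmap_spec. exact Hb. Qed.

Lemma Cmap_Cexp k a : Dk k a -> Cmap k a = Cexp k a.
Proof. intros Ha. apply Cmap_char; auto. now apply Cspec_Cexp. Qed.

Ltac Rq := Req; repeat match goal with |- context [RInt ?f ?a ?b] =>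
    let s := fresh "s" in pose (s := (RInt f a b : R)); change (RInt f a b) with s; clearbody s end.

Lemma smooth_cont f x : smooth f -> continuous f x.
Proof. intros H. exact (ex_derive_continuous f x (smooth_exd f H x)). Qed.
Lemma smooth_RInt f a b : smooth f -> ex_RInt f a b.
Proof. intros H. exact (ex_RInt_continuous (V:=R_CompleteNormedModule) f a b (fun z _ => smooth_cont f z H)). Qed.

Lemma RInt_plus' f g a b : smooth f -> smooth g ->
  RInt (fun x => f x + g x) a b = RInt f a b + RInt g a b.
Proof. intros. apply (RInt_plus f g); now apply smooth_RInt. Qed.
Lemma RInt_scal' f c a b : smooth f -> RInt (fun x => c * f x) a b = c * RInt f a b.
Proof. intros. apply (RInt_scal f); now apply smooth_RInt. Qed.
Lemma RInt_sum' (F : nat -> R -> R) n a b : (forall i, smooth (F i)) ->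
  RInt (fun x => sum_n (fun i => F i x) n) a b = @sum_n R_AbelianMonoid (fun i => RInt (F i) a b) n.
Proof.
  intros H. induction n.
  - rewrite sum0. apply RInt_ext. intros; now rewrite sum0.
  - rewrite sumS. rewrite <- IHn. rewrite <- RInt_plus'. apply RInt_ext. intros; now rewrite sumS.
    apply smooth_sum; auto. auto.
Qed.
Lemma RInt_ext' (f g : R -> R) a b : (forall x, f x = g x) -> RInt f a b = RInt g a b.
Proof. intros H. apply RInt_ext. intros; apply H. Qed.

Lemma per_nat (h : R -> R) c : (forall x, h (x + 1) = h x + c) -> forall n x, h (x + INR n) = h x + INR n * c.
Proof.
  intros H n. induction n; intros x. simpl. rewrite Rplus_0_r. ring.
  rewrite S_INR. replace (x + (INR n + 1)) with ((x + INR n) + 1) by ring. rewrite H, IHn. ring.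
Qed.
Lemma per_Z (h : R -> R) c : (forall x, h (x + 1) = h x + c) -> forall z x, h (x + IZR z) = h x + IZR z * c.
Proof.
  intros H z x. destruct (Z.le_gt_cases 0 z).
  - rewrite <- (Z2Nat.id z) by lia. rewrite <- INR_IZR_INZ. now apply per_nat.
  - replace z with (- Z.of_nat (Z.to_nat (- z)))%Z by lia.
    rewrite opp_IZR, <- INR_IZR_INZ.
    set (n := Z.to_nat (- z)).
    pose proof (per_nat h c H n (x + - INR n)) as E. replace (x + - INR n + INR n) with x in E by ring.
    lra.
Qed.
Lemma periodic_Z h : periodic h -> forall z x, h (x + IZR z) = h x.
Proof. intros H z x. rewrite (per_Z h 0). ring. intros y. rewrite H. ring. Qed.

Lemma RInt_shift F c : sfun F -> RInt F c (c + 1) = RInt F 0 1.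
Proof.
  intros [Hs Hp].
  assert (E1 : RInt F 1 (c + 1) = RInt F 0 c).
  { pose proof (RInt_comp_lin F 1 1 0 c (smooth_RInt _ _ _ Hs)) as E.
    replace (1 * 0 + 1) with 1 in E by ring. replace (1 * c + 1) with (c + 1) in E by ring.
    rewrite <- E. apply RInt_ext'. intros x. unfold scal; simpl. unfold mult; simpl.
    replace (1 * x + 1) with (x + 1) by ring. rewrite Hp. ring. }
  rewrite <- (RInt_Chasles F c 0 (c + 1)) by (now apply smooth_RInt).
  rewrite <- (RInt_Chasles F 0 1 (c + 1)) by (now apply smooth_RInt).
  rewrite E1. rewrite <- (opp_RInt_swap F 0 c) by (now apply smooth_RInt).
  unfold plus, opp; simpl. ring.
Qed.

Lemma RInt_Dper F : sfun F -> RInt (Derive F) 0 1 = 0.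
Proof.
  intros [Hs Hp]. rewrite RInt_Derive. Req. replace 1 with (0 + 1) at 1 by ring. rewrite Hp. ring.
  intros; now apply smooth_exd. intros; apply smooth_cont. now apply smooth_Derive.
Qed.

Lemma IBP1 u w : sfun u -> sfun w ->
  RInt (fun x => u x * Derive w x) 0 1 = - RInt (fun x => Derive u x * w x) 0 1.
Proof.
  intros Hu Hw.
  pose proof (RInt_Dper (fun x => u x * w x) (sfun_mult _ _ Hu Hw)) as E.
  rewrite (RInt_ext' _ (fun x => Derive u x * w x + u x * Derive w x)) in E.
  rewrite RInt_plus' in E. lra.
  apply smooth_mult. apply smooth_Derive, Hu. apply Hw.
  apply smooth_mult. apply Hu. apply smooth_Derive, Hw.
  intros x. apply Derive_mult; apply smooth_exd; [apply Hu|apply Hw].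
Qed.

Lemma IBP i : forall u w, sfun u -> sfun w ->
  RInt (fun x => u x * Derive_n w i x) 0 1 = (-1) ^ i * RInt (fun x => Derive_n u i x * w x) 0 1.
Proof.
  induction i; intros u w Hu Hw.
  - simpl. Rq; ring.
  - simpl Derive_n at 1. rewrite IBP1; auto. 2: now apply sfun_Derive_n.
    rewrite IHi; auto. 2: now apply sfun_Derive.
    rewrite (RInt_ext' (fun x => Derive_n (Derive u) i x * w x) (fun x => Derive_n u (S i) x * w x)).
    simpl pow. Rq; ring. intros x. now rewrite Derive_n_S'.
Qed.

Lemma Adj k a u v : sfc a -> sfun u -> sfun v ->
  RInt (fun x => u x * sum_n (fun i => (-1) ^ i * Derive_n (fun y => a i y * v y) i x) k) 0 1 =
  RInt (fun x => v x * op k a u x) 0 1.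
Proof.
  intros Ha Hu Hv.
  rewrite (RInt_ext' _ (fun x => sum_n (fun i => (-1) ^ i * (u x * Derive_n (fun y => a i y * v y) i x)) k)).
  2:{ intros x. rewrite <- sum_scal'. apply sum_ext'. intros; Req; ring. }
  rewrite RInt_sum'. 2:{ intros i. apply smooth_scal, smooth_mult. apply Hu. apply smooth_Derive_n, smooth_mult. apply Ha. apply Hv. }
  unfold op.
  rewrite (RInt_ext' _ (fun x => sum_n (fun i => Derive_n u i x * a i x * v x) k)).
  2:{ intros x. rewrite <- sum_scal'. apply sum_ext'. intros; Req; ring. }
  rewrite RInt_sum'. 2:{ intros i. apply smooth_mult. apply smooth_mult. apply smooth_Derive_n, Hu. apply Ha. apply Hv. }
  apply sum_ext'. intros i.
  rewrite RInt_scal'. rewrite IBP; auto. 2: now apply sfun_mult.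
  rewrite <- Rmult_assoc. rewrite <- Rpow_mult_distr. replace ((-1) * (-1)) with 1 by ring. rewrite pow1, Rmult_1_l.
  apply RInt_ext'. intros; ring.
  apply smooth_mult. apply Hu. apply smooth_Derive_n, smooth_mult. apply Ha. apply Hv.
Qed.

Lemma RInt_zero_nonneg F a b : a < b -> (forall x, a <= x <= b -> continuous F x) ->
  (forall x, a <= x <= b -> 0 <= F x) -> RInt F a b = 0 -> forall x, a <= x <= b -> F x = 0.
Proof.
  intros Hab Hc Hp HI x1 Hx1.
  destruct (Rle_lt_or_eq_dec 0 (F x1) (Hp x1 Hx1)) as [Hlt|Heq]; [|auto].
  exfalso.
  pose proof (proj1 (filterlim_locally F (F x1)) (Hc x1 Hx1) (mkposreal (F x1 / 2) ltac:(lra))) as L.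
  destruct L as [d Hd]. simpl in Hd.
  set (c := Rmax a (x1 - d / 2)). set (e := Rmin b (x1 + d / 2)).
  assert (Hd2 : 0 < d / 2) by (pose proof (cond_pos d); lra).
  assert (Hce : c < e).
  { unfold c, e. apply Rmax_lub_lt; apply Rmin_glb_lt; lra. }
  assert (Hac : a <= c) by apply Rmax_l. assert (Heb : e <= b) by apply Rmin_l.
  assert (Hcx : c <= x1 + d / 2) by (unfold c; apply Rmax_lub; lra).
  assert (Hex : x1 - d / 2 <= e) by (unfold e; apply Rmin_glb; lra).
  assert (Hc' : x1 - d / 2 <= c) by apply Rmax_r. assert (He' : e <= x1 + d / 2) by apply Rmin_r.
  assert (exR : forall u v, a <= u -> u <= v -> v <= b -> ex_RInt F u v).
  { intros u v H1 H2 H3. apply (ex_RInt_continuous (V:=R_CompleteNormedModule)). intros z Hz. apply Hc.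
    rewrite Rmin_left in Hz by lra. rewrite Rmax_right in Hz by lra. lra. }
  assert (P1 : 0 <= RInt F a c).
  { apply RInt_ge_0; auto. apply exR; lra. intros; apply Hp; lra. }
  assert (P3 : 0 <= RInt F e b).
  { apply RInt_ge_0; auto. apply exR; lra. intros; apply Hp; lra. }
  assert (P2 : 0 < RInt F c e).
  { apply RInt_gt_0; auto. intros z Hz.
    assert (B : ball x1 d z).
    { unfold ball; simpl. unfold AbsRing_ball, abs, minus, plus, opp; simpl.
      apply Rabs_def1; lra. }
    specialize (Hd z B). unfold ball in Hd; simpl in Hd. unfold AbsRing_ball, abs, minus, plus, opp in Hd; simpl in Hd.
    apply Rabs_def2 in Hd. lra.
    intros; apply Hc; lra. }
  rewrite <- (RInt_Chasles F a c b) in HI by (apply exR; lra).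
  rewrite <- (RInt_Chasles F c e b) in HI by (apply exR; lra).
  unfold plus in HI; simpl in HI. lra.
Qed.

Lemma nondeg h : sfun h -> (forall w, sfun w -> RInt (fun x => w x * h x) 0 1 = 0) -> forall x, h x = 0.
Proof.
  intros Hh H x.
  assert (E : RInt (fun y => h y * h y) x (x + 1) = 0).
  { rewrite RInt_shift. apply H; auto. now apply sfun_mult. }
  assert (Z := RInt_zero_nonneg (fun y => h y * h y) x (x+1) ltac:(lra)
     (fun z _ => smooth_cont _ z (smooth_mult _ _ (proj1 Hh) (proj1 Hh)))
     (fun z _ => Rle_0_sqr (h z)) E x ltac:(lra)).
  simpl in Z. apply Rmult_integral in Z. tauto.
Qed.

Lemma cont_pt f x : smooth f -> continuity_pt f x.
Proof. intros H. apply continuity_pt_filterlim. now apply smooth_cont. Qed.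

Lemma diff_incr f : diffS1 f -> forall x y, x < y -> f x < f y.
Proof.
  intros [Hs [Hp Hper]] x y Hxy.
  destruct (MVT_gen f x y (Derive f)) as [c [Hc E]].
  - intros z _. apply Derive_correct. now apply smooth_exd.
  - intros z _. now apply cont_pt.
  - specialize (Hp c). nra.
Qed.

Lemma diff_le f : diffS1 f -> forall x y, f x <= f y -> x <= y.
Proof.
  intros Hf x y H. destruct (Rle_lt_dec x y); auto. pose proof (diff_incr f Hf y x r). lra.
Qed.

Lemma diff_surj f : diffS1 f -> forall y, exists x, f x = y.
Proof.
  intros Hf y. destruct Hf as [Hs [Hp Hper]].
  pose (n := up (y - f 0)). destruct (archimed (y - f 0)) as [A1 A2].
  assert (Fn : forall z, f (IZR z) = f 0 + IZR z).
  { intros z. rewrite <- (Rplus_0_l (IZR z)) at 1. rewrite (per_Z f 1); auto. ring. }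
  assert (Fn2 : f (IZR n - 2) = f 0 + IZR n - 2).
  { replace (IZR n - 2) with (IZR (n - 2)). rewrite Fn. rewrite minus_IZR. ring. rewrite minus_IZR. auto. }
  destruct (IVT_gen_consistent f (IZR n - 2) (IZR n) y) as [x [_ Hx]].
  - intros; now apply smooth_cont.
  - rewrite Fn, Fn2. rewrite Rmin_left by lra. rewrite Rmax_right by lra. unfold n in *. lra.
  - eauto.
Qed.

Lemma inverse_exists f : diffS1 f -> exists g,
  (forall y, f (g y) = y) /\ (forall x, g (f x) = x) /\ smooth g /\
  (forall y, g (y + 1) = g y + 1) /\ (forall y, is_derive g y (/ Derive f (g y))).
Proof.
  intros Hf.
  destruct (choice (fun y x => f x = y) (diff_surj f Hf)) as [g Hg].
  assert (Hgf : forall x, g (f x) = x).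
  { intros x. pose proof (Hg (f x)). apply Rle_antisym; apply (diff_le f Hf); lra. }
  assert (Hfs := proj1 Hf). assert (Hfp := proj1 (proj2 Hf)). assert (Hf1 := proj2 (proj2 Hf)).
  assert (Hgi : forall u v, u <= v -> g u <= g v).
  { intros u v H. apply (diff_le f Hf). now rewrite !Hg. }
  assert (Hd : forall y, is_derive g y (/ Derive f (g y))).
  { intros y. apply is_derive_Reals.
    assert (Cg : continuity_pt g y).
    { apply (Ranalysis5.continuity_pt_recip_interv f g (g y - 1) (g y + 1)); try lra.
      - intros; now apply (diff_incr f Hf).
      - intros. unfold comp. apply Hg.
      - intros x H1 H2. split; apply (diff_le f Hf); rewrite Hg; auto.
      - intros; now apply cont_pt.
      - pose proof (diff_incr f Hf (g y - 1) (g y) ltac:(lra)).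
        pose proof (diff_incr f Hf (g y) (g y + 1) ltac:(lra)). rewrite Hg in *. lra. }
    assert (Prf : forall a, g (y - 1) <= a <= g (y + 1) -> derivable_pt f a).
    { intros a _. apply ex_derive_Reals_0. now apply smooth_exd. }
    assert (Pi : g (y - 1) <= g y <= g (y + 1)) by (split; apply Hgi; lra).
    pose proof (Ranalysis5.derivable_pt_lim_recip_interv f g (y - 1) (y + 1) y Prf Cg ltac:(lra) ltac:(lra) Pi) as L.
    rewrite Derive_Reals in L. replace (/ Derive f (g y)) with (1 / Derive f (g y)) by (unfold Rdiv; ring).
    apply L. intros; unfold comp; apply Hg.
    specialize (Hfp (g y)). lra. }
  exists g. split; auto. split; auto. split; [|split].
  - assert (Sm : forall k, smooth k -> smooth (fun y => k (g y))).
    { intros k0 Hk0.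
      apply (Alg_smooth (fun h => smooth h \/ exists k, smooth k /\ h = fun y => k (g y))).
      2:{ apply Ag. right. eauto. }
      intros h [H|[k [Hk ->]]].
      - split. now apply smooth_exd. apply Ag. left. now apply smooth_Derive.
      - split. intros x. apply ex_derive_comp. now apply smooth_exd. eexists; apply Hd.
        apply Ag. right. exists (fun x => Derive k x * / Derive f x). split.
        apply smooth_mult. now apply smooth_Derive. apply smooth_inv. now apply smooth_Derive.
        intros x; specialize (Hfp x); lra.
        apply functional_extensionality. intros y.
        rewrite (Derive_comp k g y). rewrite (is_derive_unique _ _ _ (Hd y)). ring.
        now apply smooth_exd. eexists; apply Hd. }
    apply smooth_ext with (fun y => (fun x => x) (g y)). auto. apply (Sm (fun x => x)), smooth_id.
  - intros y. rewrite <- (Hgf (g y + 1)). rewrite Hf1, Hg. reflexivity.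
  - exact Hd.
Qed.

Definition adj (k : nat) (a : Co) (psi : R -> R) : R -> R :=
  fun x => sum_n (fun i => (-1) ^ i * Derive_n (fun y => a i y * psi y) i x) k.

Lemma sfun_adj k a psi : sfc a -> sfun psi -> sfun (adj k a psi).
Proof.
  intros Ha Hp. unfold adj. apply sfun_sum. intros i. apply sfun_scal. apply sfun_Derive_n. now apply sfun_mult.
Qed.
Lemma sfun_op k a psi : sfc a -> sfun psi -> sfun (op k a psi).
Proof.
  intros Ha Hp. unfold op. apply sfun_sum. intros i. apply sfun_mult; auto. now apply sfun_Derive_n.
Qed.

Lemma diff_Dper f : diffS1 f -> periodic (Derive f).
Proof.
  intros [Hs [Hp H1]] x.
  transitivity (Derive (fun y => f (y + 1)) x).
  - rewrite (Derive_comp f (fun y => y + 1) x).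
    replace (Derive (fun y => y + 1) x) with 1. ring.
    symmetry; apply is_derive_unique. auto_derive; auto.
    now apply smooth_exd. auto_derive; auto.
  - rewrite (Derive_ext _ (fun y => f y + 1)) by auto.
    rewrite Derive_plus. rewrite Derive_const. ring. now apply smooth_exd. apply ex_derive_const.
Qed.

Lemma sfun_Df f : diffS1 f -> sfun (Derive f).
Proof. intros Hf. split. apply smooth_Derive, Hf. now apply diff_Dper. Qed.

Lemma sfun_compf phi f : diffS1 f -> sfun phi -> sfun (fun x => phi (f x)).
Proof.
  intros Hf [Hs Hp]. split. apply smooth_comp; auto. apply Hf.
  intros x. rewrite (proj2 (proj2 Hf)). apply Hp.
Qed.

Lemma chvar f F : diffS1 f -> sfun F -> RInt (fun x => Derive f x * F (f x)) 0 1 = RInt F 0 1.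
Proof.
  intros Hf HF.
  pose proof (RInt_comp F f (Derive f) 0 1) as E.
  rewrite <- (RInt_shift F (f 0) HF).
  replace (f 0 + 1) with (f 1) by (rewrite <- (proj2 (proj2 Hf)); f_equal; ring). rewrite <- E.
  - apply RInt_ext'. intros x. reflexivity.
  - intros; apply smooth_cont, HF.
  - intros x _. split. apply Derive_correct. apply smooth_exd, Hf. apply smooth_cont. apply smooth_Derive, Hf.
Qed.

Lemma nondeg_w h w : sfun h -> sfun w -> (forall x, 0 < w x) -> RInt (fun x => w x * h x * h x) 0 1 = 0 ->
  forall x, h x = 0.
Proof.
  intros Hh Hw Hp E x.
  assert (E' : RInt (fun y => w y * h y * h y) x (x + 1) = 0).
  { rewrite RInt_shift. auto. apply sfun_mult; auto. now apply sfun_mult. }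
  assert (Z := RInt_zero_nonneg (fun y => w y * h y * h y) x (x+1) ltac:(lra)
     (fun z _ => smooth_cont _ z (smooth_mult _ _ (smooth_mult _ _ (proj1 Hw) (proj1 Hh)) (proj1 Hh)))
     (fun z _ => ltac:(pose proof (Hp z); pose proof (Rle_0_sqr (h z)); unfold Rsqr in *; nra)) E' x ltac:(lra)).
  simpl in Z. pose proof (Hp x). assert (h x * h x = 0) by nra. apply Rmult_integral in H0. tauto.
Qed.

Lemma adj_natural k f a b : diffS1 f -> Dk k a -> Dk k b -> act_rel k f a b ->
  forall phi, sfun phi -> forall x, Derive f x * adj k b phi (f x) = adj k a (fun y => phi (f y)) x.
Proof.
  intros Hf Ha Hb Hab phi Hphi.
  destruct (inverse_exists f Hf) as [g [Hfg [Hgf [Hgs [Hg1 Hgd]]]]].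
  assert (Ha' := Dk_sfc k a Ha). assert (Hb' := Dk_sfc k b Hb).
  assert (Hpf := sfun_compf phi f Hf Hphi).
  set (H := fun x => Derive f x * adj k b phi (f x) - adj k a (fun y => phi (f y)) x).
  assert (HH : sfun H).
  { unfold H. apply sfun_plus. apply sfun_mult. now apply sfun_Df. apply sfun_compf; auto. now apply sfun_adj.
    apply sfun_opp. now apply sfun_adj. }
  assert (Key : forall chi, sfun chi -> RInt (fun x => chi (f x) * H x) 0 1 = 0).
  { intros chi Hchi.
    assert (Hcf := sfun_compf chi f Hf Hchi).
    assert (E1 : RInt (fun x => chi (f x) * adj k a (fun y => phi (f y)) x) 0 1 =
                 RInt (fun x => phi x * op k b chi x) 0 1).
    { pose proof (Adj k a (fun x => chi (f x)) (fun y => phi (f y)) Ha' Hcf Hpf) as A.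
      cbv beta in A. unfold adj. rewrite A. clear A.
      transitivity (RInt (fun x => Derive f x * (phi (f x) * op k b chi (f x))) 0 1).
      apply RInt_ext'. intros x. rewrite <- (Hab chi Hchi x). ring.
      apply (chvar f (fun y => phi y * op k b chi y)); auto. apply sfun_mult; auto. now apply sfun_op. }
    assert (E2 : RInt (fun x => chi (f x) * (Derive f x * adj k b phi (f x))) 0 1 =
                 RInt (fun x => chi x * adj k b phi x) 0 1).
    { transitivity (RInt (fun x => Derive f x * (chi (f x) * adj k b phi (f x))) 0 1).
      apply RInt_ext'. intros x. ring.
      apply (chvar f (fun y => chi y * adj k b phi y)); auto. apply sfun_mult; auto. now apply sfun_adj. }
    assert (E3 : RInt (fun x => chi x * adj k b phi x) 0 1 = RInt (fun x => phi x * op k b chi x) 0 1).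
    { unfold adj. apply Adj; auto. }
    unfold H. rewrite (RInt_ext' _ (fun x => chi (f x) * (Derive f x * adj k b phi (f x)) + (-1) * (chi (f x) * adj k a (fun y => phi (f y)) x))).
    2:{ intros; ring. }
    rewrite RInt_plus'. rewrite RInt_scal'. rewrite E1, E2, E3. Rq; ring.
    - apply smooth_mult. apply Hcf. apply sfun_adj; auto.
    - apply smooth_mult. apply Hcf. apply smooth_mult. apply sfun_Df; auto. apply sfun_compf; auto. now apply sfun_adj.
    - apply smooth_scal. apply smooth_mult. apply Hcf. apply sfun_adj; auto. }
  set (chi := fun y => / Derive f (g y) * H (g y)).
  assert (Hchi : sfun chi).
  { unfold chi. split.
    - apply smooth_mult. apply (smooth_comp (fun z => / Derive f z) g); auto. apply smooth_inv. apply smooth_Derive, Hf.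
      intros z; pose proof (proj1 (proj2 Hf) z); lra.
      apply (smooth_comp H g); auto. apply HH.
    - intros y. rewrite Hg1. rewrite (diff_Dper f Hf). rewrite (proj2 HH). reflexivity. }
  specialize (Key chi Hchi).
  intros x. cut (H x = 0). unfold H; lra. revert x.
  apply (nondeg_w H (fun x => / Derive f x)); auto.
  - split. apply smooth_inv. apply smooth_Derive, Hf. intros z; pose proof (proj1 (proj2 Hf) z); lra.
    intros y. now rewrite (diff_Dper f Hf).
  - intros z. apply Rinv_0_lt_compat, Hf.
  - transitivity (RInt (fun x => chi (f x) * H x) 0 1); [|exact Key].
    apply RInt_ext'. intros x. unfold chi. rewrite Hgf. ring.
Qed.

Lemma fext2 (a b : Co) : (forall i x, a i x = b i x) -> a = b.
Proof. intros H. apply functional_extensionality; intros i. apply functional_extensionality; intros x. apply H. Qed.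

Lemma RInt_zero a b : RInt (fun _ => 0) a b = 0.
Proof. rewrite RInt_const. unfold scal; simpl; unfold mult; simpl. ring. Qed.

Lemma Dk_plus k a c : Dk k a -> Dk k c -> Dk k (fun i x => a i x + c i x).
Proof.
  intros Ha Hc. apply Dk_of. intros j. apply sfun_plus; now apply (Dk_sfc k).
  intros j x Hj. rewrite (Dk_ord k a), (Dk_ord k c); auto. ring.
Qed.
Lemma Dk_scal k r a : Dk k a -> Dk k (fun i x => r * a i x).
Proof.
  intros Ha. apply Dk_of. intros j. apply sfun_scal; now apply (Dk_sfc k).
  intros j x Hj. rewrite (Dk_ord k a); auto. ring.
Qed.
Lemma Dk_mw k a w : Dk k a -> sfun w -> Dk k (fun i x => a i x * w x).
Proof.
  intros Ha Hw. apply Dk_of. intros j. apply sfun_mult; auto. now apply (Dk_sfc k).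
  intros j x Hj. rewrite (Dk_ord k a); auto. ring.
Qed.
Lemma Dk_0only k c : sfun (c 0%nat) -> (forall i x, (0 < i)%nat -> c i x = 0) -> Dk k c.
Proof.
  intros H0 H. apply Dk_of. intros [|j]. auto. apply sfun_ext with (fun _ => 0). intros; rewrite H; auto; lia. apply sfun_const.
  intros j x Hj. apply H; lia.
Qed.
Lemma Dk_01 k c : (1 <= k)%nat -> sfun (c 0%nat) -> sfun (c 1%nat) -> (forall i x, (1 < i)%nat -> c i x = 0) -> Dk k c.
Proof.
  intros Hk H0 H1 H. apply Dk_of. intros [|[|j]]; auto. apply sfun_ext with (fun _ => 0). intros; rewrite H; auto; lia. apply sfun_const.
  intros j x Hj. apply H; lia.
Qed.

Lemma op_0only k c g x : (forall i y, (0 < i)%nat -> c i y = 0) -> op k c g x = c 0%nat x * g x.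
Proof.
  intros H. rewrite (op_extend 0 k). unfold op. rewrite sum0. reflexivity.
  intros j y Hj. apply H; auto. lia.
Qed.
Lemma op_01 k c g x : (1 <= k)%nat -> (forall i y, (1 < i)%nat -> c i y = 0) ->
  op k c g x = c 0%nat x * g x + c 1%nat x * Derive g x.
Proof.
  intros Hk H. rewrite (op_extend 1 k); auto. unfold op. rewrite sumS, sum0. reflexivity.
Qed.
Lemma adj_0only k c g x : smooth g -> smooth (c 0%nat) -> (forall i y, (0 < i)%nat -> c i y = 0) ->
  adj k c g x = c 0%nat x * g x.
Proof.
  intros Hg Hc H. unfold adj. rewrite (sum_extend _ 0 k). rewrite sum0. simpl. ring. lia.
  intros i Hi. rewrite (Derive_n_ext _ (fun _ => 0)). rewrite Dn_zero. ring.
  intros t. rewrite H; auto. ring.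
Qed.
Lemma adj_01 k c g x : (1 <= k)%nat -> smooth g -> (forall i y, (1 < i)%nat -> c i y = 0) ->
  adj k c g x = c 0%nat x * g x - Derive (fun y => c 1%nat y * g y) x.
Proof.
  intros Hk Hg H. unfold adj. rewrite (sum_extend _ 1 k); auto. rewrite sumS, sum0. simpl. Req; ring.
  intros i Hi. rewrite (Derive_n_ext _ (fun _ => 0)). rewrite Dn_zero. ring.
  intros t. rewrite H; auto. ring.
Qed.

Lemma op_plus_c k a c g x : op k (fun i y => a i y + c i y) g x = op k a g x + op k c g x.
Proof.
  unfold op. rewrite <- sum_plus'. apply sum_ext'. intros; ring.
Qed.
Lemma op_scal_c k r a g x : op k (fun i y => r * a i y) g x = r * op k a g x.
Proof.
  unfold op. rewrite <- sum_scal'. apply sum_ext'. intros; ring.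
Qed.
Lemma adj_plus_c k a c g x : smc a -> smc c -> smooth g ->
  adj k (fun i y => a i y + c i y) g x = adj k a g x + adj k c g x.
Proof.
  intros Ha Hc Hg. unfold adj. rewrite <- sum_plus'. apply sum_ext'. intros i.
  rewrite (Derive_n_ext _ (fun y => a i y * g y + c i y * g y)) by (intros; ring).
  rewrite Dn_plus. ring. apply smooth_mult; auto. apply smooth_mult; auto.
Qed.
Lemma adj_scal_c k r a g x : adj k (fun i y => r * a i y) g x = r * adj k a g x.
Proof.
  unfold adj. rewrite <- sum_scal'. apply sum_ext'. intros i.
  rewrite (Derive_n_ext _ (fun y => r * (a i y * g y))) by (intros; ring).
  rewrite Dn_scal. ring.
Qed.

Lemma Cspec_adj k a b g : Cspec k a b -> sfun g -> forall x, op k b g x = adj k a g x.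
Proof. intros [_ E] Hg x. rewrite E; auto. Qed.

Lemma Cspec_intro k a b : Dk k b -> (forall g, sfun g -> forall x, op k b g x = adj k a g x) -> Cspec k a b.
Proof. intros Hb H. split; auto. intros g Hg. apply functional_extensionality. intros x. apply H; auto. Qed.

Lemma in_Ik_ext k T S : eqmap k T S -> in_Ik k S -> in_Ik k T.
Proof.
  intros E [H1 [H2 [H3 H4]]]. split; [|split; [|split]].
  - intros a Ha. rewrite E; auto.
  - intros a c Ha Hc. rewrite !E; auto. now apply Dk_plus.
  - intros r a Ha. rewrite !E; auto. now apply Dk_scal.
  - intros f Hf a b Ha Hb Hab. rewrite !E; auto.
Qed.
Lemma in_Ik_comp k T S : in_Ik k T -> in_Ik k S -> in_Ik k (mcomp T S).
Proof.
  intros [T1 [T2 [T3 T4]]] [S1 [S2 [S3 S4]]]. unfold mcomp. split; [|split; [|split]].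
  - intros a Ha. auto.
  - intros a c Ha Hc. rewrite S2; auto.
  - intros r a Ha. rewrite S3; auto.
  - intros f Hf a b Ha Hb Hab. apply T4; auto.
Qed.

Lemma op_const1 k c x : op k c (fun _ => 1) x = c 0%nat x.
Proof.
  unfold op. rewrite (sum_extend _ 0 k). rewrite sum0. simpl. ring. lia.
  intros i Hi. rewrite Dn_const; auto. ring.
Qed.
Lemma a0_natural k f a b : act_rel k f a b -> forall x, Derive f x * b 0%nat (f x) = a 0%nat x.
Proof.
  intros H x. pose proof (H (fun _ => 1) (sfun_const 1) x) as E.
  rewrite !op_const1 in E. exact E.
Qed.

Lemma Cmap_add k a c : Dk k a -> Dk k c -> Cmap k (fun i x => a i x + c i x) = (fun i x => Cmap k a i x + Cmap k c i x).
Proof.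
  intros Ha Hc. apply Cmap_char. now apply Dk_plus.
  apply Cspec_intro. apply Dk_plus; apply (Cmap_spec k); auto.
  intros g Hg x. rewrite op_plus_c. rewrite !(Cspec_adj k _ _ g) by (auto; now apply Cmap_spec).
  rewrite adj_plus_c; auto. now apply (Dk_smc k). now apply (Dk_smc k). apply Hg.
Qed.
Lemma Cmap_scal k r a : Dk k a -> Cmap k (fun i x => r * a i x) = (fun i x => r * Cmap k a i x).
Proof.
  intros Ha. apply Cmap_char. now apply Dk_scal.
  apply Cspec_intro. apply Dk_scal; apply (Cmap_spec k); auto.
  intros g Hg x. rewrite op_scal_c. rewrite !(Cspec_adj k _ _ g) by (auto; now apply Cmap_spec).
  rewrite adj_scal_c; auto.
Qed.
Lemma Cmap_Dk k a : Dk k a -> Dk k (Cmap k a).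
Proof. intros Ha. apply (Cmap_spec k a Ha). Qed.

Lemma in_Ik_C k : in_Ik k (Cmap k).
Proof.
  split; [|split; [|split]].
  - apply Cmap_Dk.
  - apply Cmap_add.
  - intros; now apply Cmap_scal.
  - intros f Hf a b Ha Hb Hab phi Hphi x.
    rewrite (Cspec_adj k b _ phi (Cmap_spec k b Hb) Hphi).
    rewrite (Cspec_adj k a _ _ (Cmap_spec k a Ha) (sfun_compf phi f Hf Hphi)).
    apply adj_natural; auto.
Qed.

Lemma Dk_P0 k a : Dk k a -> Dk k (P0 k a).
Proof. intros Ha. apply Dk_0only. apply (Dk_sfc k a Ha). intros [|i] x H. lia. reflexivity. Qed.

Lemma in_Ik_P0 k : in_Ik k (P0 k).
Proof.
  split; [|split; [|split]].
  - apply Dk_P0.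
  - intros a c Ha Hc. apply fext2. intros [|i] x; simpl; auto. ring.
  - intros r a Ha. apply fext2. intros [|i] x; simpl; auto. ring.
  - intros f Hf a b Ha Hb Hab phi Hphi x.
    rewrite !op_0only by (intros [|i] y H; [lia|reflexivity]). simpl.
    rewrite <- (a0_natural k f a b Hab). ring.
Qed.

Lemma P0s_C k a : Dk k a -> forall x, P0s k a 0%nat x = Cmap k a 0%nat x.
Proof.
  intros Ha x. rewrite <- (op_const1 k (Cmap k a)).
  rewrite (Cspec_adj k a _ _ (Cmap_spec k a Ha) (sfun_const 1)).
  unfold adj, P0s. apply sum_ext'. intros i. f_equal. apply Derive_n_ext. intros; ring.
Qed.

Lemma eq_P0C k : eqmap k (mcomp (P0 k) (Cmap k)) (P0s k).
Proof.
  intros a Ha. unfold mcomp. apply fext2. intros [|i] x; simpl; auto. symmetry; now apply P0s_C.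
Qed.

Lemma in_Ik_P0s k : in_Ik k (P0s k).
Proof.
  apply (in_Ik_ext k _ (mcomp (P0 k) (Cmap k))).
  intros a Ha. symmetry. now apply eq_P0C.
  apply in_Ik_comp. apply in_Ik_P0. apply in_Ik_C.
Qed.

Lemma Dk_P0s k a : Dk k a -> Dk k (P0s k a).
Proof. apply (proj1 (in_Ik_P0s k)). Qed.

Lemma P1_sfun k a : Dk k a -> sfun (P1 k a 1%nat).
Proof.
  intros Ha. unfold P1. apply sfun_sum. intros j. apply sfun_scal. apply sfun_Derive_n. now apply (Dk_sfc k).
Qed.
Lemma Dk_P1 k a : (1 <= k)%nat -> Dk k a -> Dk k (P1 k a).
Proof.
  intros Hk Ha. apply Dk_01. exact Hk. change (P1 k a 0%nat) with (fun _ : R => 0). apply sfun_const. now apply P1_sfun.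
  intros [|[|i]] x H; try (exfalso; lia). reflexivity.
Qed.

Lemma I1 k a : (1 <= k)%nat -> Dk k a -> forall x, P0s k a 0%nat x = a 0%nat x - Derive (P1 k a 1%nat) x.
Proof.
  intros Hk Ha x. destruct k as [|k']. lia. unfold P0s, P1. replace (S k' - 1)%nat with k' by lia.
  rewrite sum_first. simpl pow. rewrite Rmult_1_l.
  assert (E : Derive (fun y => sum_n (fun j => (-1) ^ j * Derive_n (a (S j)) j y) k') x =
              sum_n (fun j => (-1) ^ j * Derive_n (a (S j)) (S j) x) k').
  { change (Derive (fun y => sum_n (fun j => (-1) ^ j * Derive_n (a (S j)) j y) k') x) with
      (Derive_n (fun y => sum_n (fun j => (fun z => (-1) ^ j * Derive_n (a (S j)) j z) y) k') 1 x).
    rewrite Dn_sum. apply sum_ext'. intros j. simpl. rewrite Derive_scal. reflexivity.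
    intros j. apply smooth_scal. apply smooth_Derive_n. now apply (Dk_smc (S k')). }
  rewrite E. simpl Derive_n at 1.
  rewrite (sum_ext' (fun i => -1 * (-1) ^ i * Derive_n (a (S i)) (S i) x) (fun i => -1 * ((-1) ^ i * Derive_n (a (S i)) (S i) x))) by (intros; ring).
  rewrite sum_scal'. Req; ring.
Qed.

Lemma P1_add k a c : Dk k a -> Dk k c -> P1 k (fun i x => a i x + c i x) = (fun i x => P1 k a i x + P1 k c i x).
Proof.
  intros Ha Hc. apply fext2. intros [|[|i]] x; simpl; try ring.
  rewrite <- sum_plus'. apply sum_ext'. intros j. rewrite Dn_plus. ring.
  apply (Dk_smc k a Ha). apply (Dk_smc k c Hc).
Qed.
Lemma P1_scal k r a : P1 k (fun i x => r * a i x) = (fun i x => r * P1 k a i x).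
Proof.
  apply fext2. intros [|[|i]] x; simpl; try ring.
  rewrite <- sum_scal'. apply sum_ext'. intros j. rewrite Dn_scal. ring.
Qed.

Lemma Dk_L k a : (1 <= k)%nat -> Dk k (Lmap k a).
Proof.
  intros Hk. apply Dk_01. exact Hk. change (Lmap k a 0%nat) with (fun _ : R => 0). apply sfun_const.
  change (Lmap k a 1%nat) with (fun _ : R => RInt (a 0%nat) 0 1). apply sfun_const.
  intros [|[|i]] x H; try (exfalso; lia). reflexivity.
Qed.

Lemma in_Ik_L k : (1 <= k)%nat -> in_Ik k (Lmap k).
Proof.
  intros Hk. split; [|split; [|split]].
  - intros; now apply Dk_L.
  - intros a c Ha Hc. apply fext2. intros [|[|i]] x; simpl; try ring.
    apply RInt_plus'. apply (Dk_smc k a Ha). apply (Dk_smc k c Hc).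
  - intros r a Ha. apply fext2. intros [|[|i]] x; simpl; try ring.
    apply RInt_scal'. apply (Dk_smc k a Ha).
  - intros f Hf a b Ha Hb Hab phi Hphi x.
    rewrite !op_01; auto. 2,3: intros [|[|i]] y H; try (exfalso; lia); reflexivity. simpl.
    assert (I : RInt (a 0%nat) 0 1 = RInt (b 0%nat) 0 1).
    { rewrite <- (chvar f (b 0%nat) Hf). apply RInt_ext'. intros y. symmetry. now apply (a0_natural k f a b).
      apply (Dk_sfc k b Hb). }
    rewrite I. rewrite (Derive_comp phi f x). ring. apply smooth_exd, Hphi. apply smooth_exd, Hf.
Qed.

Lemma const_of_D0 h : (forall x, ex_derive h x) -> (forall x, Derive h x = 0) -> forall x y, h x = h y.
Proof.
  intros Hd H0 x y.
  destruct (MVT_gen h x y (Derive h)) as [c [_ E]].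
  - intros z _. now apply Derive_correct.
  - intros z _. apply continuity_pt_filterlim. exact (ex_derive_continuous h z (Hd z)).
  - rewrite H0 in E. lra.
Qed.

Definition uu (y0 y : R) := sin (PI * y + - (PI * y0)) ^ 2.
Definition vv (y0 y : R) := cos (PI * y + - (PI * y0)) ^ 2.

Lemma uu_sfun y0 : sfun (uu y0).
Proof.
  split. apply smooth_pow. exact (proj1 (smooth_trig PI (- (PI * y0)))).
  intros y. unfold uu. replace (PI * (y + 1) + - (PI * y0)) with ((PI * y + - (PI * y0)) + PI) by ring.
  rewrite neg_sin. ring.
Qed.
Lemma vv_sfun y0 : sfun (vv y0).
Proof.
  split. apply smooth_pow. exact (proj2 (smooth_trig PI (- (PI * y0)))).
  intros y. unfold vv. replace (PI * (y + 1) + - (PI * y0)) with ((PI * y + - (PI * y0)) + PI) by ring.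
  rewrite neg_cos. ring.
Qed.
Lemma uu_vv y0 y : uu y0 y + vv y0 y = 1.
Proof. unfold uu, vv. rewrite <- (sin2_cos2 (PI * y + - (PI * y0))). unfold Rsqr. ring. Qed.
Lemma uu_0 y0 : uu y0 y0 = 0.
Proof. unfold uu. replace (PI * y0 + - (PI * y0)) with 0 by ring. rewrite sin_0. ring. Qed.
Lemma vv_0 y0 : vv y0 (y0 + / 2) = 0.
Proof. unfold vv. replace (PI * (y0 + / 2) + - (PI * y0)) with (PI / 2) by (unfold Rdiv; ring). rewrite cos_PI2. ring. Qed.

Lemma decomp N y0 (Z : (R -> R) -> Prop) :
  (forall w1 w2, sfun w1 -> sfun w2 -> Z w1 -> Z w2 -> Z (fun y => w1 y + w2 y)) ->
  (forall w, sfun w -> (flat w N y0 \/ flat w N (y0 + / 2)) -> Z w) ->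
  Z (fun _ => 1).
Proof.
  intros Hplus Hbase.
  set (M := (2 * N)%nat).
  set (w := fun t y => uu y0 y ^ t * (vv y0 y ^ (M - t) * Binomial.C M t)).
  assert (Ws : forall t, sfun (w t)).
  { intros t. unfold w. apply sfun_mult. apply sfun_pow, uu_sfun. apply sfun_mult. apply sfun_pow, vv_sfun. apply sfun_const. }
  assert (Wz : forall t, Z (w t)).
  { intros t. apply Hbase; auto. destruct (le_lt_dec N t) as [Ht|Ht].
    - left. unfold w. apply flat_mult_r. apply smooth_pow, uu_sfun. apply smooth_mult. apply smooth_pow, vv_sfun. apply smooth_const.
      apply flat_mono with t; auto.
      apply (Dn_pow (uu y0) y0 (proj1 (uu_sfun y0)) (uu_0 y0) t).
    - right. unfold w. apply flat_mult_l. apply smooth_pow, uu_sfun. apply smooth_mult. apply smooth_pow, vv_sfun. apply smooth_const.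
      apply flat_mult_r. apply smooth_pow, vv_sfun. apply smooth_const.
      apply flat_mono with (M - t)%nat. 2: unfold M; lia.
      apply (Dn_pow (vv y0) (y0 + / 2) (proj1 (vv_sfun y0)) (vv_0 y0) (M - t)). }
  assert (Ps : forall m, Z (fun y => sum_n (fun t => w t y) m)).
  { induction m.
    - replace (fun y => sum_n (fun t => w t y) 0) with (w 0%nat). auto.
      apply functional_extensionality; intros; now rewrite sum0.
    - replace (fun y => sum_n (fun t => w t y) (S m)) with (fun y => sum_n (fun t => w t y) m + w (S m) y).
      apply Hplus; auto. apply sfun_sum; auto.
      apply functional_extensionality; intros; now rewrite sumS. }
  replace (fun _ : R => 1) with (fun y => sum_n (fun t => w t y) M). apply Ps.
  apply functional_extensionality; intros y.
  rewrite sum_n_Reals. rewrite <- (pow1 M). rewrite <- (uu_vv y0 y). rewrite binomial.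
  apply sum_eq. intros t _. unfold w. ring.
Qed.

Lemma CC_id k a : Dk k a -> Cmap k (Cmap k a) = a.
Proof.
  intros Ha. assert (HC := Cmap_spec k a Ha). assert (HCd := Cmap_Dk k a Ha).
  apply Cmap_char; auto. apply Cspec_intro; auto.
  intros g Hg. set (h := fun x => op k a g x - adj k (Cmap k a) g x).
  assert (Hh : sfun h).
  { unfold h. apply sfun_plus. apply sfun_op; auto. now apply (Dk_sfc k).
    apply sfun_opp. apply sfun_adj; auto. now apply (Dk_sfc k). }
  assert (Z : forall x, h x = 0).
  { apply nondeg; auto. intros w Hw.
    rewrite (RInt_ext' _ (fun x => w x * op k a g x + (-1) * (w x * adj k (Cmap k a) g x))) by (intros; unfold h; ring).
    rewrite RInt_plus', RInt_scal'.
    - pose proof (Adj k a g w (Dk_sfc k a Ha) Hg Hw) as A1.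
      pose proof (Adj k (Cmap k a) w g (Dk_sfc k _ HCd) Hw Hg) as A2.
      change (RInt (fun x => w x * adj k (Cmap k a) g x) 0 1 = RInt (fun x => g x * op k (Cmap k a) w x) 0 1) in A2.
      rewrite A2, <- A1.
      rewrite (RInt_ext' (fun x => g x * op k (Cmap k a) w x) (fun x => g x * adj k a w x)).
      unfold adj. Rq; ring. intros x. rewrite (Cspec_adj k a _ w HC Hw). reflexivity.
    - apply smooth_mult. apply Hw. apply sfun_adj; auto. now apply (Dk_sfc k).
    - apply smooth_mult. apply Hw. apply sfun_op; auto. now apply (Dk_sfc k).
    - apply smooth_scal, smooth_mult. apply Hw. apply sfun_adj; auto. now apply (Dk_sfc k). }
  intros x. specialize (Z x). unfold h in Z. lra.
Qed.

Lemma flat_Dop c n x0 : smc c -> (forall j, flat (c j) (S n) x0) -> forall j, flat (Dop c j) n x0.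
Proof.
  intros Hc H j. unfold Dop. apply flat_plus. apply smooth_Derive, Hc.
  destruct j. apply smooth_const. apply Hc.
  apply flat_S, H.
  destruct j. apply flat_zero. apply flat_mono with (S n); auto.
Qed.

Lemma flat_Diter a n x0 : smooth a -> flat a n x0 -> forall i j, flat (Diter i a j) (n - i) x0.
Proof.
  intros Ha H i. induction i; intros j.
  - rewrite Nat.sub_0_r. destruct j; simpl. exact H. apply flat_zero.
  - destruct (le_lt_dec n i). replace (n - S i)%nat with 0%nat by lia. apply flat_0.
    simpl. apply flat_Dop. now apply smc_Diter.
    intros j'. replace (S (n - S i)) with (n - i)%nat by lia. apply IHi.
Qed.

Lemma P1_flat k a x0 : (1 <= k)%nat -> Dk k a -> (forall i, flat (a i) k x0) -> P1 k a 1%nat x0 = 0.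
Proof.
  intros Hk Ha H. unfold P1. apply sum_zero'. intros j Hj. rewrite H. ring. lia.
Qed.

Lemma P1C_flat k a x0 : (1 <= k)%nat -> Dk k a -> (forall i, flat (a i) (2 * k) x0) ->
  P1 k (Cmap k a) 1%nat x0 = 0.
Proof.
  intros Hk Ha H. rewrite Cmap_Cexp; auto. unfold P1, Cexp. apply sum_zero'. intros j Hj.
  rewrite Dn_sum. rewrite sum_zero'. ring.
  intros i Hi. rewrite Dn_scal. rewrite (flat_Diter (a i) (2 * k) x0). ring.
  apply (Dk_smc k a Ha). apply H. lia.
  intros i. apply smooth_scal. apply smc_Diter. apply (Dk_smc k a Ha).
Qed.

Lemma P1_exd k a x : Dk k a -> ex_derive (P1 k a 1%nat) x.
Proof. intros Ha. apply smooth_exd. apply (P1_sfun k a Ha). Qed.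

Lemma P1C_const k a : (1 <= k)%nat -> Dk k a ->
  forall x y, P1 k (Cmap k a) 1%nat x + P1 k a 1%nat x = P1 k (Cmap k a) 1%nat y + P1 k a 1%nat y.
Proof.
  intros Hk Ha. assert (HCd := Cmap_Dk k a Ha).
  apply (const_of_D0 (fun x => P1 k (Cmap k a) 1%nat x + P1 k a 1%nat x)).
  - intros x. apply (ex_derive_plus (P1 k (Cmap k a) 1%nat) (P1 k a 1%nat)); now apply P1_exd.
  - intros x. rewrite Derive_plus by (now apply P1_exd).
    pose proof (I1 k a Hk Ha x) as E1. pose proof (I1 k (Cmap k a) Hk HCd x) as E2.
    rewrite P0s_C in E2 by auto. rewrite CC_id in E2 by auto.
    rewrite P0s_C in E1 by auto. lra.
Qed.

Lemma P1C k a : (1 <= k)%nat -> Dk k a -> forall x, P1 k (Cmap k a) 1%nat x = - P1 k a 1%nat x.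
Proof.
  intros Hk Ha.
  set (Z := fun w => sfun w -> forall x, P1 k (Cmap k (fun i y => a i y * w y)) 1%nat x + P1 k (fun i y => a i y * w y) 1%nat x = 0).
  assert (Z1 : Z (fun _ => 1)).
  { apply (decomp (2 * k) 0).
    - intros w1 w2 H1 H2 Z1 Z2; unfold Z in *; intros _ x.
      replace (fun i y => a i y * (w1 y + w2 y)) with
        (fun i y => (fun i y => a i y * w1 y) i y + (fun i y => a i y * w2 y) i y)
        by (apply fext2; intros; ring).
      rewrite Cmap_add by (now apply Dk_mw).
      rewrite P1_add by (apply Cmap_Dk; now apply Dk_mw).
      rewrite P1_add by (now apply Dk_mw).
      specialize (Z1 H1 x). specialize (Z2 H2 x). lra.
    - intros w Hw Hf; unfold Z; intros _ x. assert (Hd := Dk_mw k a w Ha Hw).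
      destruct Hf as [Hf|Hf]; [pose (p := 0)|pose (p := 0 + /2)];
      rewrite (P1C_const k _ Hk Hd x p);
      (rewrite (P1C_flat k _ p Hk Hd), (P1_flat k _ p Hk Hd); [ring| |]);
      intros i; (apply flat_mult_l; [apply (Dk_smc k a Ha)|apply Hw|]);
      (apply flat_mono with (2 * k)%nat; [exact Hf|lia]). }
  intros x. unfold Z in Z1. specialize (Z1 (sfun_const 1) x).
  replace (fun i y => a i y * 1) with a in Z1 by (apply fext2; intros; ring). lra.
Qed.

Lemma P1_nat_pt k f : (1 <= k)%nat -> diffS1 f -> forall a b, Dk k a -> Dk k b -> act_rel k f a b ->
  forall x, P1 k b 1%nat (f x) = P1 k a 1%nat x.
Proof.
  intros Hk Hf.
  set (E := fun a b x => P1 k b 1%nat (f x) - P1 k a 1%nat x).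
  assert (Ec : forall a b, Dk k a -> Dk k b -> act_rel k f a b -> forall x y, E a b x = E a b y).
  { intros a b Ha Hb Hab. apply const_of_D0.
    - intros x. unfold E. apply (ex_derive_minus (fun x => P1 k b 1%nat (f x)) (P1 k a 1%nat)).
      apply ex_derive_comp. now apply P1_exd. apply smooth_exd, Hf.
      now apply P1_exd.
    - intros x. unfold E. rewrite Derive_minus. rewrite (Derive_comp (P1 k b 1%nat) f x).
      pose proof (I1 k a Hk Ha x) as E1. pose proof (I1 k b Hk Hb (f x)) as E2.
      pose proof (a0_natural k f a b Hab x) as N1.
      pose proof (a0_natural k f _ _ (proj2 (proj2 (proj2 (in_Ik_P0s k))) f Hf a b Ha Hb Hab) x) as N2.
      assert (D1 : Derive (P1 k b 1%nat) (f x) = b 0%nat (f x) - P0s k b 0%nat (f x)) by lra.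
      rewrite D1. assert (D2 : Derive (P1 k a 1%nat) x = a 0%nat x - P0s k a 0%nat x) by lra.
      rewrite D2. rewrite <- N1, <- N2. ring.
      now apply P1_exd. apply smooth_exd, Hf.
      apply ex_derive_comp. now apply P1_exd. apply smooth_exd, Hf. now apply P1_exd. }
  destruct (diff_surj f Hf (f 0 + / 2)) as [x1 Hx1].
  intros a b Ha Hb Hab.
  set (Z := fun w => sfun w -> forall x, E (fun i y => a i y * w (f y)) (fun i y => b i y * w y) x = 0).
  assert (Z1 : Z (fun _ => 1)).
  { apply (decomp k (f 0)).
    - intros w1 w2 H1 H2 Z1 Z2; unfold Z in *; intros _ x. unfold E.
      replace (fun i y => a i y * (w1 (f y) + w2 (f y))) with
        (fun i y => (fun i y => a i y * w1 (f y)) i y + (fun i y => a i y * w2 (f y)) i y)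
        by (apply fext2; intros; ring).
      replace (fun i y => b i y * (w1 y + w2 y)) with
        (fun i y => (fun i y => b i y * w1 y) i y + (fun i y => b i y * w2 y) i y)
        by (apply fext2; intros; ring).
      rewrite !P1_add; try (apply Dk_mw; auto; apply sfun_compf; auto).
      specialize (Z1 H1 x). specialize (Z2 H2 x). unfold E in Z1, Z2. lra.
    - intros w Hw Hfl; unfold Z; intros _ x.
      assert (Hwf := sfun_compf w f Hf Hw).
      assert (Ha' := Dk_mw k a _ Ha Hwf). assert (Hb' := Dk_mw k b w Hb Hw).
      assert (Hr : act_rel k f (fun i y => a i y * w (f y)) (fun i y => b i y * w y)).
      { intros phi Hphi y. unfold op.
        rewrite (sum_ext' _ (fun i => w (f y) * (b i (f y) * Derive_n phi i (f y)))) by (intros; ring).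
        rewrite (sum_ext' (fun i => a i y * w (f y) * _) (fun i => w (f y) * (a i y * Derive_n (fun z => phi (f z)) i y))) by (intros; ring).
        rewrite !sum_scal'. fold (op k b phi (f y)). fold (op k a (fun z => phi (f z)) y).
        rewrite <- (Hab phi Hphi y). ring. }
      assert (G : forall p, flat w k (f p) -> E (fun i y => a i y * w (f y)) (fun i y => b i y * w y) x = 0).
      { intros p Hp. rewrite (Ec _ _ Ha' Hb' Hr x p); unfold E.
        rewrite (P1_flat k _ (f p) Hk Hb'), (P1_flat k _ p Hk Ha'). ring.
        - intros i. apply flat_mult_l. apply (Dk_smc k a Ha). apply (proj1 Hwf).
          apply flat_comp. apply (proj1 Hw). apply (proj1 Hf). exact Hp.
        - intros i. apply flat_mult_l. apply (Dk_smc k b Hb). apply (proj1 Hw). exact Hp. }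
      destruct Hfl as [Hfl|Hfl]. apply (G 0); exact Hfl. apply (G x1); rewrite Hx1; exact Hfl. }
  intros x. unfold Z in Z1. specialize (Z1 (sfun_const 1) x). unfold E in Z1.
  replace (fun i y => a i y * 1) with a in Z1 by (apply fext2; intros; ring).
  replace (fun i y => b i y * 1) with b in Z1 by (apply fext2; intros; ring). lra.
Qed.

Lemma in_Ik_P1 k : (1 <= k)%nat -> in_Ik k (P1 k).
Proof.
  intros Hk. split; [|split; [|split]].
  - intros a Ha. now apply Dk_P1.
  - apply P1_add.
  - intros; apply P1_scal.
  - intros f Hf a b Ha Hb Hab phi Hphi x.
    rewrite !op_01; auto. 2,3: intros [|[|i]] y H; try (exfalso; lia); reflexivity.
    simpl P1 at 1 3. rewrite (P1_nat_pt k f Hk Hf a b Ha Hb Hab x).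
    rewrite (Derive_comp phi f x). ring. apply smooth_exd, Hphi. apply smooth_exd, Hf.
Qed.

Lemma Cspec_self0 k c : Dk k c -> (forall i x, (0 < i)%nat -> c i x = 0) -> Cmap k c = c.
Proof.
  intros Hc H. apply Cmap_char; auto. apply Cspec_intro; auto.
  intros g Hg x. rewrite op_0only by auto. rewrite adj_0only; auto. apply Hg. apply (Dk_smc k c Hc).
Qed.

Lemma P0s_01 k c x : (1 <= k)%nat -> (forall i y, (1 < i)%nat -> c i y = 0) ->
  P0s k c 0%nat x = c 0%nat x - Derive (c 1%nat) x.
Proof.
  intros Hk H. unfold P0s. rewrite (sum_extend _ 1 k); auto. rewrite sumS, sum0. simpl.
  change (Derive (fun x0 => c 1%nat x0) x) with (Derive (c 1%nat) x). Req; ring.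
  intros i Hi. rewrite (Derive_n_ext _ (fun _ => 0)). rewrite Dn_zero. ring. intros; apply H; auto.
Qed.

Lemma P1_1 k c x : (1 <= k)%nat -> (forall i y, (1 < i)%nat -> c i y = 0) -> P1 k c 1%nat x = c 1%nat x.
Proof.
  intros Hk H. unfold P1. rewrite (sum_extend _ 0 (k - 1)). rewrite sum0. simpl. ring. lia.
  intros i Hi. rewrite (Derive_n_ext _ (fun _ => 0)). rewrite Dn_zero. ring. intros; apply H; lia.
Qed.

Lemma Dk_opp k a : Dk k a -> Dk k (fun i x => - a i x).
Proof.
  intros Ha. apply Dk_of. intros j. apply sfun_opp; now apply (Dk_sfc k).
  intros j x Hj. rewrite (Dk_ord k a); auto. ring.
Qed.

Lemma Derive_0 x : Derive (fun _ : R => 0) x = 0.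
Proof. apply Derive_const. Qed.

Theorem proposition5p1 (k : nat) (hk : (1 <= k)%nat) :
  (forall a, Dk k a -> Cspec k a (Cmap k a)) /\
  in_Ik k (Cmap k) /\ in_Ik k (P0 k) /\ in_Ik k (P0s k) /\
  in_Ik k (P1 k) /\ in_Ik k (Lmap k) /\
  (* P_0 row *)
  eqmap k (mcomp (P0 k) (P0 k)) (P0 k) /\
  eqmap k (mcomp (P0 k) (Cmap k)) (P0s k) /\
  eqmap k (mcomp (P0 k) (P0s k)) (P0s k) /\
  eqmap k (mcomp (P0 k) (P1 k)) zeromap /\
  eqmap k (mcomp (P0 k) (Lmap k)) zeromap /\
  (* C row *)
  eqmap k (mcomp (Cmap k) (P0 k)) (P0 k) /\
  eqmap k (mcomp (Cmap k) (Cmap k)) idmap /\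
  eqmap k (mcomp (Cmap k) (P0s k)) (P0s k) /\
  eqmap k (mcomp (Cmap k) (P1 k))
          (addmap (addmap (P0s k) (oppmap (P1 k))) (oppmap (P0 k))) /\
  eqmap k (mcomp (Cmap k) (Lmap k)) (oppmap (Lmap k)) /\
  (* P_0^* row *)
  eqmap k (mcomp (P0s k) (P0 k)) (P0 k) /\
  eqmap k (mcomp (P0s k) (Cmap k)) (P0 k) /\
  eqmap k (mcomp (P0s k) (P0s k)) (P0s k) /\
  eqmap k (mcomp (P0s k) (P1 k)) (addmap (P0s k) (oppmap (P0 k))) /\
  eqmap k (mcomp (P0s k) (Lmap k)) zeromap /\
  (* P_1 row *)
  eqmap k (mcomp (P1 k) (P0 k)) zeromap /\
  eqmap k (mcomp (P1 k) (Cmap k)) (oppmap (P1 k)) /\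
  eqmap k (mcomp (P1 k) (P0s k)) zeromap /\
  eqmap k (mcomp (P1 k) (P1 k)) (P1 k) /\
  eqmap k (mcomp (P1 k) (Lmap k)) (Lmap k) /\
  (* L row *)
  eqmap k (mcomp (Lmap k) (P0 k)) (Lmap k) /\
  eqmap k (mcomp (Lmap k) (Cmap k)) (Lmap k) /\
  eqmap k (mcomp (Lmap k) (P0s k)) (Lmap k) /\
  eqmap k (mcomp (Lmap k) (P1 k)) zeromap /\
  eqmap k (mcomp (Lmap k) (Lmap k)) zeromap.
Proof.
  assert (LI : forall a, Dk k a -> RInt (P0s k a 0%nat) 0 1 = RInt (a 0%nat) 0 1).
  { intros a Ha. rewrite (RInt_ext' _ (fun x => a 0%nat x + (-1) * Derive (P1 k a 1%nat) x)).
    rewrite RInt_plus', RInt_scal'. rewrite RInt_Dper. Rq; ring. now apply P1_sfun.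
    apply smooth_Derive, (P1_sfun k a Ha). apply (Dk_smc k a Ha). apply smooth_scal, smooth_Derive, (P1_sfun k a Ha).
    intros x. rewrite I1; auto. ring. }
  split. apply Cmap_spec.
  split. apply in_Ik_C. split. apply in_Ik_P0. split. apply in_Ik_P0s.
  split. now apply in_Ik_P1. split. now apply in_Ik_L.
  split. intros a Ha. apply fext2. intros [|i] x; reflexivity.
  split. apply eq_P0C.
  split. intros a Ha. apply fext2. intros [|i] x; reflexivity.
  split. intros a Ha. apply fext2. intros [|i] x; reflexivity.
  split. intros a Ha. apply fext2. intros [|i] x; reflexivity.
  split. intros a Ha. apply Cspec_self0. now apply Dk_P0. intros [|i] x H; [lia|reflexivity].
  split. intros a Ha. now apply CC_id.
  split. intros a Ha. apply Cspec_self0. now apply Dk_P0s. intros [|i] x H; [lia|reflexivity].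
  split. intros a Ha. unfold mcomp. apply Cmap_char. now apply Dk_P1. apply Cspec_intro.
  { unfold addmap, oppmap.
    apply (Dk_plus k (fun i x => P0s k a i x + - P1 k a i x) (fun i x => - P0 k a i x)).
    apply (Dk_plus k (P0s k a) (fun i x => - P1 k a i x)). now apply Dk_P0s.
    apply (Dk_opp k (P1 k a)). now apply Dk_P1.
    apply (Dk_opp k (P0 k a)). now apply Dk_P0. }
  { intros g Hg x. rewrite op_01; auto. rewrite adj_01; auto. 2: apply Hg.
    2,3: intros [|[|i]] y H; try (exfalso; lia); unfold addmap, oppmap; simpl; try ring.
    unfold addmap, oppmap.
    change (P1 k a 0%nat x) with 0. change (P0 k a 0%nat x) with (a 0%nat x).
    change (P0s k a 1%nat x) with 0. change (P0 k a 1%nat x) with 0.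
    rewrite Derive_mult. rewrite (I1 k a hk Ha x). ring.
    apply smooth_exd, (P1_sfun k a Ha). apply smooth_exd, Hg. }
  split. intros a Ha. unfold mcomp. apply Cmap_char. now apply Dk_L. apply Cspec_intro.
  { unfold oppmap. apply (Dk_opp k (Lmap k a)). now apply Dk_L. }
  { intros g Hg x. rewrite op_01; auto. rewrite adj_01; auto. 2: apply Hg.
    2,3: intros [|[|i]] y H; try (exfalso; lia); unfold oppmap; simpl; try ring.
    unfold oppmap; simpl. rewrite Derive_scal. ring. }
  split. intros a Ha. apply fext2. intros [|i] x. unfold mcomp. rewrite P0s_01; auto. simpl. rewrite Derive_0. ring.
    intros [|[|j]] y H; try (exfalso; lia). reflexivity. reflexivity.
  split. intros a Ha. apply fext2. intros [|i] x. unfold mcomp. rewrite P0s_C. rewrite CC_id; auto; try reflexivity.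
    now apply Cmap_Dk. reflexivity.
  split. intros a Ha. apply fext2. intros [|i] x. unfold mcomp. rewrite P0s_01; auto. simpl. rewrite Derive_0. ring.
    intros [|[|j]] y H; try (exfalso; lia). reflexivity. reflexivity.
  split. intros a Ha. apply fext2. intros [|i] x; unfold mcomp, addmap, oppmap.
    rewrite P0s_01; auto. rewrite (I1 k a hk Ha x). simpl. ring.
    intros [|[|j]] y H; try (exfalso; lia). reflexivity. simpl. ring.
  split. intros a Ha. apply fext2. intros [|i] x; unfold mcomp, zeromap.
    rewrite P0s_01; auto. simpl. rewrite Derive_const. ring.
    intros [|[|j]] y H; try (exfalso; lia). reflexivity. reflexivity.
  split. intros a Ha. apply fext2. intros [|[|i]] x; unfold mcomp, zeromap; try reflexivity.
    rewrite P1_1; auto. intros [|[|j]] y H; try (exfalso; lia). reflexivity.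
  split. intros a Ha. apply fext2. intros [|[|i]] x; unfold mcomp, oppmap.
    simpl; ring. exact (P1C k a hk Ha x). simpl; ring.
  split. intros a Ha. apply fext2. intros [|[|i]] x; unfold mcomp, zeromap; try reflexivity.
    rewrite P1_1; auto. intros [|[|j]] y H; try (exfalso; lia). reflexivity.
  split. intros a Ha. apply fext2. intros [|[|i]] x; unfold mcomp; try reflexivity.
    rewrite P1_1; auto. intros [|[|j]] y H; try (exfalso; lia). reflexivity.
  split. intros a Ha. apply fext2. intros [|[|i]] x; unfold mcomp; try reflexivity.
    rewrite P1_1; auto. intros [|[|j]] y H; try (exfalso; lia). reflexivity.
  split. intros a Ha. apply fext2. intros [|[|i]] x; reflexivity.
  split. intros a Ha. apply fext2. intros [|[|i]] x; unfold mcomp; try reflexivity.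
    simpl. rewrite <- (LI a Ha). apply RInt_ext'. intros y. symmetry. now apply P0s_C.
  split. intros a Ha. apply fext2. intros [|[|i]] x; unfold mcomp; try reflexivity.
    simpl. apply LI; auto.
  split. intros a Ha. apply fext2. intros [|[|i]] x; unfold mcomp, zeromap; try reflexivity.
    simpl. apply RInt_zero.
  intros a Ha. apply fext2. intros [|[|i]] x; unfold mcomp, zeromap; try reflexivity.
    simpl. apply RInt_zero.
Qed.
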